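(* Fix an integer $b\ge2$ and $\gamma\in(0,1)$, and let $\phi:\mathbb{R}\to\mathbb{R}$ be an analytic $\mathbb{Z}$-periodic function. Then exactly one of the following holds: (i) $\phi$ satisfies condition (H$^*$): $S(x,\mathbf{j})-S(x,\mathbf{i})\equiv0$ (as a function of $x\in[0,1]$) for all $\mathbf{i},\mathbf{j}\in\Sigma$; (ii) $\phi$ satisfies condition (H): $S(x,\mathbf{j})-S(x,\mathbf{i})\not\equiv0$ for all $\mathbf{i}\neq\mathbf{j}\in\Sigma$.
   Context: $\Lambda=\{0,1,\dots,b-1\}$, $\Sigma=\Lambda^{\mathbb{Z}_+}$. For $\mathbf{j}=j_1j_2\cdots\in\Sigma$ and $x\in[0,1]$, $S(x,\mathbf{j})=\sum_{n=1}^{\infty}\gamma^{n-1}\phi\big(\frac{x+j_1+j_2b+\cdots+j_nb^{n-1}}{b^n}\big)$. *)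

(* Defs.v *)
From Stdlib Require Import Reals.
From Coquelicot Require Import Coquelicot.
Open Scope R_scope.

Definition real_analytic (f : R -> R) : Prop :=
  forall x0 : R, exists (a : nat -> R) (r : R),
    0 < r /\ forall x : R, Rabs (x - x0) < r -> is_pseries a (x - x0) (f x).

Definition Z_periodic (f : R -> R) : Prop := forall x : R, f (x + 1) = f x.

(* Elements of Sigma = Lambda^{Z_+}: the digit j_k (k >= 1) is stored as j (k-1). *)
Definition is_digit_seq (b : nat) (j : nat -> nat) : Prop :=
  forall k : nat, (j k < b)%nat.

Fixpoint digit_partial (b : nat) (j : nat -> nat) (n : nat) : R :=
  match n with
  | O => 0
  | S m => digit_partial b j m + INR (j m) * INR b ^ m
  end.

(* S(x, j) = sum_{n>=1} gamma^(n-1) phi((x + j_1 + ... + j_n b^(n-1)) / b^n);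
   reindexed with n = m+1, m >= 0. *)
Definition S_fun (b : nat) (gamma : R) (phi : R -> R) (x : R) (j : nat -> nat) : R :=
  Series (fun m : nat =>
    gamma ^ m * phi ((x + digit_partial b j (S m)) / INR b ^ (S m))).

Definition cond_Hstar (b : nat) (gamma : R) (phi : R -> R) : Prop :=
  forall i j : nat -> nat, is_digit_seq b i -> is_digit_seq b j ->
    forall x : R, 0 <= x <= 1 -> S_fun b gamma phi x j - S_fun b gamma phi x i = 0.

Definition cond_H (b : nat) (gamma : R) (phi : R -> R) : Prop :=
  forall i j : nat -> nat, is_digit_seq b i -> is_digit_seq b j ->
    (exists k : nat, i k <> j k) ->
    exists x : R, 0 <= x <= 1 /\ S_fun b gamma phi x j - S_fun b gamma phi x i <> 0.

(* Main.v *)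
Require Import Defs.
From Stdlib Require Import Reals.
From Coquelicot Require Import Coquelicot.
From Stdlib Require Import Lra Lia Factorial ZArith Classical ClassicalEpsilon.
Open Scope R_scope.

Open Scope R_scope.

Lemma derive_cont (g g' : R -> R) x :
  (forall t, is_derive g t (g' t)) -> continuity_pt g x.
Proof.
  intros H. apply continuity_pt_filterlim.
  apply (ex_derive_continuous g x). exists (g' x). apply H.
Qed.

Lemma mvt_bound (g g' : R -> R) (a c K : R) :
  (forall t, is_derive g t (g' t)) ->
  (forall t, Rmin a c <= t <= Rmax a c -> Rabs (g' t) <= K) ->
  Rabs (g c - g a) <= K * Rabs (c - a).
Proof.
  intros Hd Hb.
  destruct (MVT_gen g a c g') as [z [Hz E]].
  - intros; apply Hd.
  - intros; apply (derive_cont g g'); auto.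
  - rewrite E, Rabs_mult. apply Rmult_le_compat_r. apply Rabs_pos. apply Hb; auto.
Qed.

Lemma mvt_le (g g' : R -> R) (a c : R) :
  a <= c ->
  (forall t, is_derive g t (g' t)) ->
  (forall t, a <= t <= c -> g' t <= 0) ->
  g c <= g a.
Proof.
  intros Hac Hd Hb.
  destruct (MVT_gen g a c g') as [z [Hz E]].
  - intros; apply Hd.
  - intros; apply (derive_cont g g'); auto.
  - rewrite Rmin_left in Hz by lra. rewrite Rmax_right in Hz by lra.
    assert (g' z * (c - a) <= 0).
    { apply Rmult_le_0_r; [apply Hb; lra| lra]. }
    lra.
Qed.

Lemma isd_minus (f g : R -> R) x df dg :
  is_derive f x df -> is_derive g x dg -> is_derive (fun t => f t - g t) x (df - dg).
Proof. intros H1 H2. exact (is_derive_minus f g x df dg H1 H2). Qed.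
Lemma isd_plus (f g : R -> R) x df dg :
  is_derive f x df -> is_derive g x dg -> is_derive (fun t => f t + g t) x (df + dg).
Proof. intros H1 H2. exact (is_derive_plus f g x df dg H1 H2). Qed.
Lemma isd_opp (f : R -> R) x df :
  is_derive f x df -> is_derive (fun t => - f t) x (- df).
Proof. intros H1. exact (is_derive_opp f x df H1). Qed.
Lemma isd_scal (f : R -> R) k x df :
  is_derive f x df -> is_derive (fun t => k * f t) x (k * df).
Proof. intros H1. exact (is_derive_scal f x k df H1). Qed.
Lemma isd_comp_lin (f : R -> R) a c x df :
  is_derive f (a * x + c) df -> is_derive (fun t => f (a * t + c)) x (a * df).
Proof.
  intros H1. pose proof (is_derive_comp f (fun t => a * t + c) x df a H1) as H.
  apply H. auto_derive; auto. ring.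
Qed.

Open Scope R_scope.

Lemma derive_powfact (K c : R) (n : nat) (t : R) :
  is_derive (fun t => K * (t - c) ^ (S n) / INR (fact (S n))) t
            (K * (t - c) ^ n / INR (fact n)).
Proof.
  assert (Hf : INR (fact n) <> 0) by (apply INR_fact_neq_0).
  auto_derive; auto.
  change (match n with 0%nat => 1 | S _ => INR n + 1 end) with (INR (S n)).
  rewrite S_INR, plus_INR, mult_INR.
  replace (t + - c) with (t - c) by ring.
  field. split; auto. rewrite <- mult_INR, <- plus_INR.
  apply not_0_INR. pose proof (lt_O_fact n). lia.
Qed.

Lemma taylor_chain (f : nat -> R -> R) :
  (forall k x, is_derive (f k) x (f (S k) x)) ->
  forall n c y K, c <= y -> (forall k, (k < n)%nat -> f k c = 0) ->
  (forall t, c <= t <= y -> Rabs (f n t) <= K) ->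
  Rabs (f 0%nat y) <= K * (y - c) ^ n / INR (fact n).
Proof.
  intros Hd n. revert f Hd. induction n as [|n IH]; intros f Hd c y K Hcy H0 HK.
  - simpl. replace (K * 1 / 1) with K by field. apply HK. lra.
  - assert (H1 : forall t, c <= t <= y -> Rabs (f 1%nat t) <= K * (t - c) ^ n / INR (fact n)).
    { intros t Ht. apply (IH (fun k => f (S k))).
      - intros; apply Hd.
      - lra.
      - intros k Hk. apply H0. lia.
      - intros s Hs. apply HK. lra. }
    assert (Hc : f 0%nat c = 0) by (apply H0; lia).
    apply Rabs_le. split.
    + set (g := fun t => - f 0%nat t - K * (t - c) ^ (S n) / INR (fact (S n))).
      assert (g y <= g c).
      { apply (mvt_le g (fun t => - f 1%nat t - K * (t - c) ^ n / INR (fact n))); auto.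
        - intros t. unfold g. apply isd_minus. apply isd_opp. apply Hd.
          apply derive_powfact.
        - intros t Ht. specialize (H1 t Ht). apply Rabs_le_between in H1. lra. }
      unfold g in H. rewrite Hc in H. rewrite Rminus_eq_0 in H.
      rewrite pow_i in H by lia. lra.
    + set (g := fun t => f 0%nat t - K * (t - c) ^ (S n) / INR (fact (S n))).
      assert (g y <= g c).
      { apply (mvt_le g (fun t => f 1%nat t - K * (t - c) ^ n / INR (fact n))); auto.
        - intros t. unfold g. apply isd_minus. apply Hd.
          apply derive_powfact.
        - intros t Ht. specialize (H1 t Ht). apply Rabs_le_between in H1. lra. }
      unfold g in H. rewrite Hc in H. rewrite Rminus_eq_0 in H.
      rewrite pow_i in H by lia. lra.
Qed.

Open Scope R_scope.

Lemma small_zero (u K d : R) : 0 < d -> 0 <= K ->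
  (forall s, 0 < s < d -> Rabs u <= K * s) -> u = 0.
Proof.
  intros Hd HK H.
  destruct (Req_dec u 0) as [E|E]; auto. exfalso.
  pose proof (Rabs_pos_lt u E) as Hu.
  set (s := Rmin (d / 2) (Rabs u / (2 * (K + 1)))).
  assert (Hs1 : 0 < s). { unfold s. apply Rmin_glb_lt. lra. apply Rdiv_lt_0_compat; lra. }
  assert (Hs2 : s <= d / 2) by apply Rmin_l.
  assert (Hs3 : s <= Rabs u / (2 * (K + 1))) by apply Rmin_r.
  specialize (H s ltac:(lra)).
  assert (K * s <= (K + 1) * (Rabs u / (2 * (K + 1)))).
  { apply Rmult_le_compat; lra. }
  replace ((K + 1) * (Rabs u / (2 * (K + 1)))) with (Rabs u / 2) in H0 by (field; lra).
  lra.
Qed.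

Lemma geom_zero (u C q : R) : 0 <= q < 1 ->
  (forall n : nat, Rabs u <= C * q ^ n) -> u = 0.
Proof.
  intros Hq H.
  destruct (Req_dec u 0) as [E|E]; auto. exfalso.
  pose proof (Rabs_pos_lt u E) as Hu.
  assert (HC : 0 < C).
  { specialize (H 0%nat). simpl in H. lra. }
  pose proof (is_lim_seq_geom q ltac:(rewrite Rabs_pos_eq; lra)) as L.
  apply is_lim_seq_spec in L.
  destruct (L (mkposreal (Rabs u / (2 * C)) ltac:(apply Rdiv_lt_0_compat; lra))) as [N HN].
  specialize (HN N (Nat.le_refl N)). simpl in HN.
  rewrite Rminus_0_r, Rabs_pos_eq in HN by (apply pow_le; lra).
  specialize (H N).
  assert (C * q ^ N < C * (Rabs u / (2 * C))) by (apply Rmult_lt_compat_l; lra).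
  replace (C * (Rabs u / (2 * C))) with (Rabs u / 2) in H0 by (field; lra).
  lra.
Qed.

Lemma chain_zero_step (f : nat -> R -> R) C rho a c :
  0 < rho -> a < c ->
  (forall k x, is_derive (f k) x (f (S k) x)) ->
  (forall k x, Rabs (f k x) <= C * INR (fact k) / rho ^ k) ->
  (forall x, a <= x <= c -> f 0%nat x = 0) ->
  forall x, a <= x <= c + rho / 2 -> f 0%nat x = 0.
Proof.
  intros Hr Hac Hd Hb H0.
  assert (HC : 0 <= C).
  { specialize (Hb 0%nat a). simpl in Hb. pose proof (Rabs_pos (f 0%nat a)). lra. }
  assert (Hin : forall k x, a < x < c -> f k x = 0).
  { induction k as [|k IH]; intros x Hx.
    - apply H0; lra.
    - rewrite <- (is_derive_unique (f k) x (f (S k) x) (Hd k x)).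
      rewrite (Derive_ext_loc (f k) (fun _ => 0)). apply Derive_const.
      assert (Hp : 0 < Rmin (x - a) (c - x)) by (apply Rmin_glb_lt; lra).
      exists (mkposreal _ Hp). intros t Ht.
      change (Rabs (t - x) < Rmin (x - a) (c - x)) in Ht.
      apply Rabs_def2 in Ht. destruct Ht as [Ht1 Ht2].
      pose proof (Rmin_l (x - a) (c - x)). pose proof (Rmin_r (x - a) (c - x)).
      apply IH. lra. }
  assert (Hc : forall k, f k c = 0).
  { intros k.
    apply (small_zero _ (C * INR (fact (S k)) / rho ^ (S k)) (c - a)).
    - lra.
    - apply Rmult_le_pos. apply Rmult_le_pos; auto. apply pos_INR.
      apply Rlt_le, Rinv_0_lt_compat, pow_lt; lra.
    - intros s Hs.
      pose proof (mvt_bound (f k) (f (S k)) (c - s) c (C * INR (fact (S k)) / rho ^ (S k)) (Hd k)) as M.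
      rewrite (Hin k (c - s)) in M by lra.
      replace (c - (c - s)) with s in M by ring.
      rewrite Rminus_0_r, (Rabs_pos_eq s) in M by lra.
      apply M. intros; apply Hb. }
  intros x Hx.
  destruct (Rle_lt_dec x c) as [Hxc|Hxc]. { apply H0; lra. }
  apply (geom_zero _ C (1/2)). lra.
  intros n.
  pose proof (taylor_chain f Hd n c x (C * INR (fact n) / rho ^ n) ltac:(lra)
                (fun k _ => Hc k) (fun t _ => Hb n t)) as T.
  eapply Rle_trans. apply T.
  assert (Hf : 0 < INR (fact n)) by (apply INR_fact_lt_0).
  assert (Hrn : 0 < rho ^ n) by (apply pow_lt; lra).
  replace (C * INR (fact n) / rho ^ n * (x - c) ^ n / INR (fact n)) with
    (C * ((x - c) / rho) ^ n) by (unfold Rdiv; rewrite Rpow_mult_distr, pow_inv; field; repeat split; lra).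
  apply Rmult_le_compat_l; auto. apply pow_incr. split.
  apply Rdiv_le_0_compat; lra.
  apply (Rmult_le_reg_r rho); auto. unfold Rdiv. rewrite Rmult_assoc, Rinv_l; lra.
Qed.

Lemma chain_zero_right (f : nat -> R -> R) C rho a a' :
  0 < rho -> a < a' ->
  (forall k x, is_derive (f k) x (f (S k) x)) ->
  (forall k x, Rabs (f k x) <= C * INR (fact k) / rho ^ k) ->
  (forall x, a <= x <= a' -> f 0%nat x = 0) ->
  forall x, a <= x -> f 0%nat x = 0.
Proof.
  intros Hr Hac Hd Hb H0.
  assert (HN : forall N : nat, forall x, a <= x <= a' + INR N * (rho / 2) -> f 0%nat x = 0).
  { induction N as [|N IH]; intros x Hx.
    - apply H0. simpl in Hx. lra.
    - apply (chain_zero_step f C rho a (a' + INR N * (rho / 2))); auto.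
      pose proof (pos_INR N). nra.
      rewrite S_INR in Hx. lra. }
  intros x Hx.
  destruct (INR_unbounded ((x - a') / (rho / 2))) as [N HN'].
  apply (HN N). split; auto.
  assert (x - a' < INR N * (rho / 2)).
  { apply (Rmult_lt_compat_r (rho / 2)) in HN'. 2: lra.
    unfold Rdiv at 1 in HN'. rewrite Rmult_assoc, Rinv_l in HN' by lra. lra. }
  lra.
Qed.

Lemma chain_zero (f : nat -> R -> R) C rho a a' :
  0 < rho -> a < a' ->
  (forall k x, is_derive (f k) x (f (S k) x)) ->
  (forall k x, Rabs (f k x) <= C * INR (fact k) / rho ^ k) ->
  (forall x, a <= x <= a' -> f 0%nat x = 0) ->
  forall x, f 0%nat x = 0.
Proof.
  intros Hr Hac Hd Hb H0 x.
  destruct (Rle_lt_dec a x) as [Hx|Hx].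
  - apply (chain_zero_right f C rho a a'); auto.
  - set (g := fun k t => (-1) ^ k * f k (- t)).
    assert (Hg : forall k t, is_derive (g k) t (g (S k) t)).
    { intros k t. unfold g. simpl pow.
      replace ((-1) * (-1) ^ k * f (S k) (- t)) with ((-1) ^ k * ((-1) * f (S k) (-1 * t + 0))).
      2: { replace (-1 * t + 0) with (- t) by ring. ring. }
      apply isd_scal.
      apply (is_derive_ext (fun t => f k ((-1) * t + 0))).
      { intros s. f_equal. ring. }
      apply isd_comp_lin. apply Hd. }
    assert (Hgb : forall k t, Rabs (g k t) <= C * INR (fact k) / rho ^ k).
    { intros k t. unfold g. rewrite Rabs_mult, pow_1_abs, Rmult_1_l. apply Hb. }
    pose proof (chain_zero_right g C rho (- a') (- a) Hr ltac:(lra) Hg Hgb) as Z.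
    assert (Z' : g 0%nat (- x) = 0).
    { apply Z. 2: lra. intros t Ht. unfold g. simpl. rewrite H0. ring. lra. }
    unfold g in Z'. simpl in Z'. rewrite Ropp_involutive in Z'. lra.
Qed.

Open Scope R_scope.

Lemma exs_bound (a b : nat -> R) :
  (forall n, Rabs (a n) <= b n) -> ex_series b -> ex_series a.
Proof. intros H Hb. apply (ex_series_le a b); auto. Qed.

Lemma exs_abs_bound (a b : nat -> R) :
  (forall n, Rabs (a n) <= b n) -> ex_series b -> ex_series (fun n => Rabs (a n)).
Proof. intros H Hb. apply (@ex_series_le R_AbsRing R_CompleteNormedModule _ b); auto.
  intros n. change (Rabs (Rabs (a n)) <= b n). rewrite Rabs_Rabsolu. auto. Qed.

Lemma exs_scal (c : R) (a : nat -> R) : ex_series a -> ex_series (fun n => c * a n).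
Proof. intros H. exact (@ex_series_scal_l R_AbsRing R_NormedModule c a H). Qed.
Lemma exs_ext (a b : nat -> R) : (forall n, a n = b n) -> ex_series a -> ex_series b.
Proof. intros H1 H2. exact (@ex_series_ext R_AbsRing R_NormedModule a b H1 H2). Qed.
Lemma exs_scal_r (c : R) (a : nat -> R) : ex_series a -> ex_series (fun n => a n * c).
Proof. intros H. apply (@ex_series_ext R_AbsRing R_NormedModule (fun n => c * a n)). intros n; change (c * a n = a n * c); ring. apply exs_scal; auto. Qed.
Lemma exs_minus (a b : nat -> R) : ex_series a -> ex_series b -> ex_series (fun n => a n - b n).
Proof. intros H1 H2. exact (@ex_series_minus R_AbsRing R_NormedModule a b H1 H2). Qed.
Lemma exs_plus (a b : nat -> R) : ex_series a -> ex_series b -> ex_series (fun n => a n + b n).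
Proof. intros H1 H2. exact (@ex_series_plus R_AbsRing R_NormedModule a b H1 H2). Qed.

Lemma Series_bound (a b : nat -> R) :
  (forall n, Rabs (a n) <= b n) -> ex_series b -> Rabs (Series a) <= Series b.
Proof.
  intros H Hb. eapply Rle_trans. apply Series_Rabs. eapply exs_abs_bound; eauto.
  apply Series_le; auto. intros n; split; auto. apply Rabs_pos.
Qed.

Lemma taylor2 (g g' g'' : R -> R) (K x h : R) :
  (forall y, is_derive g y (g' y)) -> (forall y, is_derive g' y (g'' y)) ->
  (forall y, Rabs (g'' y) <= K) ->
  Rabs (g (x + h) - g x - h * g' x) <= K * (h * h).
Proof.
  intros H1 H2 H3.
  set (u := fun t => g t - t * g' x).
  assert (Hu : forall t, is_derive u t (g' t - g' x)).
  { intros t. unfold u. replace (g' t - g' x) with (g' t - 1 * g' x) by ring.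
    apply isd_minus. apply H1. apply (is_derive_ext (fun t => t * g' x)). auto.
    auto_derive; auto. }
  assert (HK : 0 <= K) by (specialize (H3 x); pose proof (Rabs_pos (g'' x)); lra).
  pose proof (mvt_bound u _ x (x + h) (K * Rabs h) Hu) as M.
  replace (g (x + h) - g x - h * g' x) with (u (x + h) - u x) by (unfold u; ring).
  replace (K * (h * h)) with (K * Rabs h * Rabs (x + h - x)).
  2: { replace (x + h - x) with h by ring. rewrite Rmult_assoc, <- Rabs_mult, Rabs_pos_eq. ring.
       apply Rle_0_sqr. }
  apply M. intros t Ht.
  pose proof (mvt_bound g' g'' x t K H2 (fun s _ => H3 s)) as M2.
  eapply Rle_trans. rewrite <- (Rabs_Ropp (g' t - g' x)).
  replace (- (g' t - g' x)) with (g' x - g' t) by ring. rewrite Rabs_minus_sym. apply M2.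
  apply Rmult_le_compat_l; auto.
  destruct (Rle_dec 0 h).
  - rewrite Rmin_left in Ht by lra. rewrite Rmax_right in Ht by lra.
    rewrite !Rabs_pos_eq; lra.
  - rewrite Rmin_right in Ht by lra. rewrite Rmax_left in Ht by lra.
    rewrite Rabs_left1 by lra. rewrite Rabs_left by lra. lra.
Qed.

Lemma series_derive (f f' f'' : nat -> R -> R) (A : nat -> R) x :
  (forall m y, is_derive (f m) y (f' m y)) -> (forall m y, is_derive (f' m) y (f'' m y)) ->
  (forall m y, Rabs (f m y) <= A m) -> (forall m y, Rabs (f' m y) <= A m) ->
  (forall m y, Rabs (f'' m y) <= A m) -> ex_series A ->
  is_derive (fun y => Series (fun m => f m y)) x (Series (fun m => f' m x)).
Proof.
  intros D1 D2 B0 B1 B2 HA.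
  assert (EA : forall y, ex_series (fun m => f m y)) by (intros; eapply exs_bound; eauto).
  assert (EA' : forall y, ex_series (fun m => f' m y)) by (intros; eapply exs_bound; eauto).
  assert (HS : 0 <= Series A).
  { apply Rle_trans with (Rabs (Series (fun m => f m x))). apply Rabs_pos.
    apply Series_bound; auto. }
  apply is_derive_Reals. intros eps Heps.
  assert (Hd : 0 < eps / (Series A + 1)) by (apply Rdiv_lt_0_compat; lra).
  exists (mkposreal _ Hd). intros h Hh0 Hh. simpl in Hh.
  assert (E : (Series (fun m => f m (x + h)) - Series (fun m => f m x)) / h - Series (fun m => f' m x)
              = Series (fun m => (f m (x + h) - f m x - h * f' m x) / h)).
  { rewrite <- Series_minus by auto.
    unfold Rdiv. rewrite Rmult_comm, <- Series_scal_l.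
    rewrite <- Series_minus.
    2: { apply exs_scal. apply exs_minus; auto. }
    2: auto.
    apply Series_ext. intros n. field. auto. }
  rewrite E.
  eapply Rle_lt_trans.
  apply (Series_bound _ (fun m => A m * Rabs h)).
  { intros m. unfold Rdiv. rewrite Rabs_mult, Rabs_Rinv by auto.
    pose proof (taylor2 (f m) (f' m) (f'' m) (A m) x h (D1 m) (D2 m) (B2 m)) as T.
    apply (Rmult_le_reg_r (Rabs h)). apply Rabs_pos_lt; auto.
    rewrite Rmult_assoc, Rinv_l. 2: apply Rabs_no_R0; auto.
    rewrite Rmult_1_r. eapply Rle_trans. apply T.
    rewrite Rmult_assoc, <- Rabs_mult, (Rabs_pos_eq (h * h)). lra. apply Rle_0_sqr. }
  apply exs_scal_r; auto.
  rewrite Series_scal_r.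
  apply Rle_lt_trans with ((Series A + 1) * Rabs h).
  apply Rmult_le_compat_r. apply Rabs_pos. lra.
  apply (Rmult_lt_compat_l (Series A + 1)) in Hh. 2: lra.
  replace ((Series A + 1) * (eps / (Series A + 1))) with eps in Hh by (field; lra). lra.
Qed.

Open Scope R_scope.

Lemma sum_term_le (f : nat -> R) i n :
  (forall j, 0 <= f j) -> (i <= n)%nat -> f i <= sum_f_R0 f n.
Proof.
  intros Hf Hi. induction n as [|n IH].
  - assert (i = 0%nat) by lia. subst. simpl. lra.
  - simpl. destruct (Nat.eq_dec i (S n)) as [E|E].
    + subst. assert (0 <= sum_f_R0 f n).
      { clear IH Hi. induction n; simpl. apply Hf. specialize (Hf (S n)). lra. }
      lra.
    + specialize (IH ltac:(lia)). specialize (Hf (S n)). lra.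
Qed.

Lemma lim_bounded (u : nat -> R) (l : R) : is_lim_seq u l -> exists M, forall n, Rabs (u n) <= M.
Proof.
  intros H. apply is_lim_seq_spec in H.
  destruct (H (mkposreal 1 Rlt_0_1)) as [N HN]. simpl in HN.
  exists (Rabs l + 1 + sum_f_R0 (fun n => Rabs (u n)) N).
  intros n.
  assert (0 <= sum_f_R0 (fun n => Rabs (u n)) N).
  { apply Rle_trans with (Rabs (u 0%nat)). apply Rabs_pos.
    apply (sum_term_le (fun n => Rabs (u n))). intros; apply Rabs_pos. lia. }
  destruct (Compare_dec.le_lt_dec N n) as [Hn|Hn].
  - specialize (HN n Hn).
    pose proof (Rabs_triang_inv (u n) l). pose proof (Rabs_pos l). lra.
  - pose proof (sum_term_le (fun n => Rabs (u n)) n N (fun _ => Rabs_pos _) ltac:(lia)).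
    simpl in H1. pose proof (Rabs_pos l). lra.
Qed.

Lemma binom_le (n k : nat) :
  INR (fact (n + k)) <= 2 ^ (n + k) * INR (fact n) * INR (fact k).
Proof.
  pose proof (binomial 1 1 (n + k)) as B.
  replace (1 + 1) with 2 in B by ring.
  assert (HC : forall i, (i <= n + k)%nat -> 0 <= Binomial.C (n + k) i).
  { intros i Hi. unfold Binomial.C. apply Rdiv_le_0_compat. apply pos_INR.
    apply Rmult_lt_0_compat; apply INR_fact_lt_0. }
  assert (Ht : Binomial.C (n + k) n <= 2 ^ (n + k)).
  { rewrite B.
    pose proof (sum_term_le (fun i => if Compare_dec.le_dec i (n + k) then Binomial.C (n + k) i * 1 ^ i * 1 ^ (n + k - i) else 0) n (n + k)) as S.
    simpl in S. destruct (Compare_dec.le_dec n (n + k)) as [_|F]; [|lia].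
    rewrite !pow1, !Rmult_1_r in S.
    eapply Rle_trans. apply S.
    - intros j. destruct (Compare_dec.le_dec j (n + k)). rewrite !pow1. rewrite !Rmult_1_r. apply HC; auto. lra.
    - lia.
    - right. apply sum_eq. intros i Hi. destruct (Compare_dec.le_dec i (n + k)); [|lia]. reflexivity. }
  unfold Binomial.C in Ht. replace (n + k - n)%nat with k in Ht by lia.
  assert (0 < INR (fact n) * INR (fact k)) by (apply Rmult_lt_0_compat; apply INR_fact_lt_0).
  apply (Rmult_le_compat_r (INR (fact n) * INR (fact k))) in Ht. 2: lra.
  unfold Rdiv in Ht. rewrite Rmult_assoc, Rinv_l in Ht by lra. lra.
Qed.

Open Scope R_scope.

Lemma pseries_R (a : nat -> R) x l : is_pseries a x l -> is_series (fun n => a n * x ^ n) l.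
Proof.
  intros H. unfold is_pseries in H.
  eapply (@is_series_ext R_AbsRing R_NormedModule). 2: exact H.
  intros n. rewrite pow_n_pow. change (x ^ n * a n = a n * x ^ n). ring.
Qed.

Lemma radius_ge (a : nat -> R) s :
  ex_series (fun n => a n * s ^ n) -> Rbar_le (Rabs s) (CV_radius a).
Proof.
  intros H. destruct (CV_radius_bounded a) as [Hub _].
  apply Hub. apply ex_series_lim_0 in H. destruct (lim_bounded _ _ H) as [M HM].
  exists M. intros n. rewrite Rabs_mult. rewrite (Rabs_pos_eq (Rabs s ^ n)) by (apply pow_le, Rabs_pos). rewrite RPow_abs, <- Rabs_mult. apply HM.
Qed.

Lemma local_ps (phi : R -> R) (x0 : R) (a : nat -> R) (r : R) :
  0 < r -> (forall x, Rabs (x - x0) < r -> is_pseries a (x - x0) (phi x)) ->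
  exists t, 0 < t /\ (forall k, ex_derive (Derive_n phi k) x0) /\
   (forall k x, (1 <= k)%nat -> Rabs (x - x0) < t / 4 ->
      Rabs (Derive_n phi k x) <= 2 * INR (fact k) * (2 / t) ^ k).
Proof.
  intros Hr Hps.
  assert (Hloc : forall x, Rabs (x - x0) < r -> phi x = PSeries a (x - x0)).
  { intros x Hx. symmetry. apply is_pseries_unique. auto. }
  assert (Hex : forall s, Rabs s < r -> ex_series (fun n => a n * s ^ n)).
  { intros s Hs. eexists. apply pseries_R. specialize (Hps (x0 + s)).
    replace (x0 + s - x0) with s in Hps by ring. apply Hps. auto. }
  assert (Hrad : forall u, Rabs u < r -> Rbar_lt (Rabs u) (CV_radius a)).
  { intros u Hu. set (s := (Rabs u + r) / 2).
    assert (Hs : Rabs s < r).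
    { unfold s. pose proof (Rabs_pos u). rewrite (Rabs_pos_eq ((Rabs u + r) / 2)); lra. }
    pose proof (radius_ge a s (Hex s Hs)) as R1.
    assert (Rabs u < Rabs s). { unfold s. pose proof (Rabs_pos u). rewrite (Rabs_pos_eq ((Rabs u + r) / 2)); lra. }
    destruct (CV_radius a) as [c| |]; simpl in *; lra. }
  assert (Hball : forall x, Rabs (x - x0) < r ->
            locally x (fun t => phi t = PSeries a (t + - x0))).
  { intros x Hx. assert (Hp : 0 < r - Rabs (x - x0)) by lra.
    exists (mkposreal _ Hp). intros y Hy. change (Rabs (y - x) < r - Rabs (x - x0)) in Hy.
    rewrite Hloc. f_equal. pose proof (Rabs_triang (y - x) (x - x0)).
    replace (y - x + (x - x0)) with (y - x0) in H by ring. lra. }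
  assert (Hder : forall k x, Rabs (x - x0) < r ->
            Derive_n phi k x = PSeries (PS_derive_n k a) (x - x0)).
  { intros k x Hx. rewrite (Derive_n_ext_loc phi (fun t => PSeries a (t + - x0))).
    2: apply Hball; auto.
    rewrite Derive_n_comp_trans. apply Derive_n_PSeries. apply Hrad. auto. }
  set (s := r / 2).
  assert (Hs : Rabs s < r) by (unfold s; rewrite Rabs_pos_eq; lra).
  destruct (lim_bounded _ _ (ex_series_lim_0 _ (Hex s Hs))) as [M0 HM0].
  set (M := Rmax 1 M0).
  assert (HM1 : 1 <= M) by apply Rmax_l.
  assert (HM2 : forall n, Rabs (a n * s ^ n) <= M) by (intros; eapply Rle_trans; [apply HM0|apply Rmax_r]).
  set (t := s / M).
  assert (Ht : 0 < t) by (unfold t, s; apply Rdiv_lt_0_compat; lra).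
  assert (Hts : t <= s).
  { unfold t. apply (Rmult_le_reg_r M). lra. unfold Rdiv. rewrite Rmult_assoc, Rinv_l by lra.
    unfold s. nra. }
  assert (Ha : forall m, (1 <= m)%nat -> Rabs (a m) * t ^ m <= 1).
  { intros m Hm. unfold t. unfold Rdiv. rewrite Rpow_mult_distr, pow_inv.
    specialize (HM2 m). rewrite Rabs_mult, (Rabs_pos_eq (s ^ m)) in HM2 by (apply pow_le; unfold s; lra).
    assert (M <= M ^ m).
    { destruct m. lia. simpl. replace M with (M * 1) at 1 by ring.
      apply Rmult_le_compat_l. lra. apply pow_R1_Rle. auto. }
    assert (0 < M ^ m) by (apply pow_lt; lra).
    apply (Rmult_le_reg_r (M ^ m)); auto.
    replace (Rabs (a m) * (s ^ m * / M ^ m) * M ^ m) with (Rabs (a m) * s ^ m) by (field; lra).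
    lra. }
  exists t. split; auto. split.
  - intros k.
    apply (ex_derive_ext_loc (fun y => Derive_n (PSeries a) k (y + - x0))).
    + exists (mkposreal _ Hr). intros y Hy. change (Rabs (y - x0) < r) in Hy.
      rewrite Hder by auto. rewrite Derive_n_PSeries. reflexivity.
      apply Hrad. replace (y + - x0) with (y - x0) by ring. auto.
    + apply (ex_derive_comp (Derive_n (PSeries a) k) (fun y => y + - x0)).
      * replace (x0 + - x0) with 0 by ring.
        apply (ex_derive_n_PSeries (S k)). apply Hrad. rewrite Rabs_R0. lra.
      * auto_derive. auto.
  - intros k x Hk Hx.
    assert (Hxr : Rabs (x - x0) < r) by (unfold s in Hts; lra).
    rewrite Hder by auto. unfold PSeries.
    set (u := x - x0) in *.
    set (K := INR (fact k) * (2 / t) ^ k).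
    assert (HK : 0 <= K).
    { unfold K. apply Rmult_le_pos. apply pos_INR. apply pow_le. apply Rdiv_le_0_compat; lra. }
    eapply Rle_trans.
    apply (Series_bound _ (fun n => K * (1/2) ^ n)).
    2: { apply exs_scal. apply ex_series_geom. rewrite Rabs_pos_eq; lra. }
    + intros n. unfold PS_derive_n.
      rewrite !Rabs_mult, <- RPow_abs.
      assert (Hf : 0 < INR (fact n)) by apply INR_fact_lt_0.
      rewrite (Rabs_pos_eq (INR (fact (n + k)) / INR (fact n))).
      2: { apply Rdiv_le_0_compat. apply pos_INR. auto. }
      pose proof (Ha (n + k)%nat ltac:(lia)) as Hank.
      assert (Htp : 0 < t ^ (n + k)) by (apply pow_lt; auto).
      assert (Hab : Rabs (a (n + k)%nat) <= / t ^ (n + k)).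
      { apply (Rmult_le_reg_r (t ^ (n + k))); auto. rewrite Rinv_l; lra. }
      assert (Hu : Rabs u ^ n <= (t / 4) ^ n).
      { apply pow_incr. split. apply Rabs_pos. lra. }
      pose proof (binom_le n k) as Bn.
      apply Rle_trans with (INR (fact (n + k)) / INR (fact n) * / t ^ (n + k) * (t / 4) ^ n).
      { apply Rmult_le_compat. 
        - apply Rmult_le_pos. apply Rdiv_le_0_compat. apply pos_INR. auto. apply Rabs_pos.
        - apply pow_le, Rabs_pos.
        - apply Rmult_le_compat_l; auto. apply Rdiv_le_0_compat. apply pos_INR. auto.
        - auto. }
      apply Rle_trans with (2 ^ (n + k) * INR (fact n) * INR (fact k) / INR (fact n) * / t ^ (n + k) * (t / 4) ^ n).
      { apply Rmult_le_compat_r. apply pow_le; lra.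
        apply Rmult_le_compat_r. apply Rlt_le, Rinv_0_lt_compat; auto.
        unfold Rdiv. apply Rmult_le_compat_r. apply Rlt_le, Rinv_0_lt_compat; auto. auto. }
      right. unfold K.
      assert (0 < t ^ n) by (apply pow_lt; auto).
      assert (0 < t ^ k) by (apply pow_lt; auto).
      assert (0 < 2 ^ n) by (apply pow_lt; lra).
      assert (E1 : (t / 4) ^ n = t ^ n / (2 ^ n * 2 ^ n)).
      { unfold Rdiv. rewrite Rpow_mult_distr, pow_inv. rewrite <- Rpow_mult_distr.
        replace (2 * 2) with 4 by ring. reflexivity. }
      assert (E2 : (2 / t) ^ k = 2 ^ k / t ^ k).
      { unfold Rdiv. rewrite Rpow_mult_distr, pow_inv. auto. }
      assert (E3 : (1 / 2) ^ n = 1 / 2 ^ n).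
      { unfold Rdiv. rewrite Rpow_mult_distr, pow_inv, pow1. auto. }
      rewrite E1, E2, E3, !pow_add. field. repeat split; lra.
    + rewrite Series_scal_l. rewrite (Series_ext _ (fun n => (1/2) ^ n)) by auto.
      rewrite (is_series_unique _ _ (is_series_geom (1/2) ltac:(rewrite Rabs_pos_eq; lra))).
      unfold K. right. field.
Qed.

Open Scope R_scope.

Lemma per_nat (f : R -> R) : (forall x, f (x + 1) = f x) ->
  forall (n : nat) x, f (x + INR n) = f x /\ f (x - INR n) = f x.
Proof.
  intros H n. induction n as [|n IH]; intros x.
  - simpl. rewrite Rplus_0_r, Rminus_0_r. auto.
  - rewrite S_INR. split.
    + replace (x + (INR n + 1)) with ((x + INR n) + 1) by ring. rewrite H. apply IH.
    + rewrite <- (H (x - (INR n + 1))). replace (x - (INR n + 1) + 1) with (x - INR n) by ring.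
      apply IH.
Qed.

Lemma per_Z (f : R -> R) : (forall x, f (x + 1) = f x) ->
  forall (z : Z) x, f (x + IZR z) = f x.
Proof.
  intros H z x. destruct (Z_le_gt_dec 0 z) as [Hz|Hz].
  - rewrite <- (Z2Nat.id z) by auto. rewrite <- INR_IZR_INZ. apply per_nat; auto.
  - replace z with (- Z.of_nat (Z.to_nat (- z)))%Z by lia.
    rewrite opp_IZR, <- INR_IZR_INZ. apply per_nat; auto.
Qed.

Lemma per_reduce (f : R -> R) : (forall x, f (x + 1) = f x) ->
  forall x, exists y, 0 <= y <= 1 /\ f x = f y.
Proof.
  intros H x. exists (x + IZR (- Int_part x)).
  destruct (base_Int_part x) as [H1 H2]. split. rewrite opp_IZR. lra.
  symmetry. apply per_Z; auto.
Qed.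

Lemma phi_global (phi : R -> R) :
  real_analytic phi -> Z_periodic phi ->
  exists C rho, 0 < C /\ 0 < rho /\
   (forall k x, is_derive (Derive_n phi k) x (Derive_n phi (S k) x)) /\
   (forall k x, Rabs (Derive_n phi k x) <= C * INR (fact k) / rho ^ k).
Proof.
  intros Han Hper.
  assert (Hloc : forall x0, exists t : posreal, (forall k, ex_derive (Derive_n phi k) x0) /\
     (forall k x, (1 <= k)%nat -> Rabs (x - x0) < t / 4 ->
        Rabs (Derive_n phi k x) <= 2 * INR (fact k) * (2 / t) ^ k)).
  { intros x0. destruct (Han x0) as [a [r [Hr Hps]]].
    destruct (local_ps phi x0 a r Hr Hps) as [t [Ht [H1 H2]]].
    exists (mkposreal t Ht). simpl. auto. }
  set (tf := fun x0 => proj1_sig (constructive_indefinite_description _ (Hloc x0))).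
  assert (Htf : forall x0, (forall k, ex_derive (Derive_n phi k) x0) /\
     (forall k x, (1 <= k)%nat -> Rabs (x - x0) < tf x0 / 4 ->
        Rabs (Derive_n phi k x) <= 2 * INR (fact k) * (2 / tf x0) ^ k)).
  { intros x0. unfold tf. destruct (constructive_indefinite_description _ (Hloc x0)). simpl. auto. }
  assert (Hchain : forall k x, is_derive (Derive_n phi k) x (Derive_n phi (S k) x)).
  { intros k x. apply Derive_correct. apply (proj1 (Htf x)). }
  assert (Hdp : forall k x, Derive_n phi k (x + 1) = Derive_n phi k x).
  { intros k x. rewrite <- Derive_n_comp_trans. apply Derive_n_ext. intros; apply Hper. }
  set (delta := fun x0 => mkposreal (tf x0 / 4) ltac:(pose proof (cond_pos (tf x0)); lra)).
  destruct (compactness_value_1d 0 1 delta) as [d Hd].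
  set (rho := 2 * d).
  assert (Hrho : 0 < rho) by (unfold rho; pose proof (cond_pos d); lra).
  assert (Hb1 : forall k x, (1 <= k)%nat -> 0 <= x <= 1 ->
            Rabs (Derive_n phi k x) <= 2 * INR (fact k) / rho ^ k).
  { intros k x Hk Hx. specialize (Hd x Hx).
    apply NNPP. intros Hn. apply Hd. intros [t0 [Ht0 [Hxt Hdt]]]. apply Hn.
    simpl in Hxt, Hdt.
    eapply Rle_trans. apply (proj2 (Htf t0)); auto.
    unfold Rdiv at 2. apply Rmult_le_compat_l. apply Rmult_le_pos; [lra|apply pos_INR].
    rewrite <- pow_inv. apply pow_incr. pose proof (cond_pos (tf t0)). split.
    - apply Rlt_le, Rmult_lt_0_compat; [lra|apply Rinv_0_lt_compat; lra].
    - unfold rho. replace (2 / tf t0) with (/ (tf t0 / 2)) by (field; lra).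
      apply Rinv_le_contravar. pose proof (cond_pos d); lra. lra. }
  assert (Hb1' : forall k x, (1 <= k)%nat -> Rabs (Derive_n phi k x) <= 2 * INR (fact k) / rho ^ k).
  { intros k x Hk. destruct (per_reduce (Derive_n phi k) (Hdp k) x) as [y [Hy E]].
    rewrite E. apply Hb1; auto. }
  set (M := Rabs (phi 0) + 2 / rho).
  assert (Hb0 : forall x, Rabs (phi x) <= M).
  { intros x. destruct (per_reduce phi Hper x) as [y [Hy E]]. rewrite E.
    pose proof (mvt_bound phi (Derive_n phi 1) 0 y (2 / rho) (Hchain 0%nat)) as MV.
    assert (Rabs (phi y - phi 0) <= 2 / rho * Rabs (y - 0)).
    { apply MV. intros t _. eapply Rle_trans. apply Hb1'. lia. simpl. right. field. lra. }
    rewrite Rminus_0_r, (Rabs_pos_eq y) in H by lra.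
    assert (2 / rho * y <= 2 / rho).
    { replace (2 / rho) with (2 / rho * 1) at 2 by ring. apply Rmult_le_compat_l.
      apply Rlt_le, Rdiv_lt_0_compat; lra. lra. }
    pose proof (Rabs_triang_inv (phi y) (phi 0)). unfold M. lra. }
  exists (Rmax 2 M), rho. split. eapply Rlt_le_trans; [|apply Rmax_l]; lra.
  split; auto. split; auto.
  intros k x. destruct k as [|k].
  - simpl. replace (Rmax 2 M * 1 / 1) with (Rmax 2 M) by field.
    eapply Rle_trans. apply Hb0. apply Rmax_r.
  - eapply Rle_trans. apply Hb1'. lia.
    unfold Rdiv. rewrite !Rmult_assoc. apply Rmult_le_compat_r.
    apply Rmult_le_pos. apply pos_INR. apply Rlt_le, Rinv_0_lt_compat, pow_lt; lra.
    apply Rmax_l.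
Qed.

Open Scope R_scope.

Definition Sk (b : nat) (g : R) (phi : R -> R) (j : nat -> nat) (k : nat) (x : R) : R :=
  Series (fun m => g ^ m * (/ INR b ^ S m) ^ k *
     Derive_n phi k ((x + digit_partial b j (S m)) / INR b ^ S m)).

Lemma Sk0 b g phi j x : Sk b g phi j 0 x = S_fun b g phi x j.
Proof. unfold Sk, S_fun. apply Series_ext. intros n. simpl. ring. Qed.

Lemma INRb_pos (b : nat) : (2 <= b)%nat -> 2 <= INR b.
Proof. intros H. apply le_INR in H. simpl in H. lra. Qed.

Lemma pow_le_one (x : R) n : 0 <= x <= 1 -> x ^ n <= 1.
Proof. intros H. induction n; simpl. lra. assert (0 <= x ^ n) by (apply pow_le; lra). nra. Qed.

Lemma Sk_chain (b : nat) (g : R) (phi : R -> R) C rho (j : nat -> nat) :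
  (2 <= b)%nat -> 0 < g < 1 -> 0 < C -> 0 < rho ->
  (forall k x, is_derive (Derive_n phi k) x (Derive_n phi (S k) x)) ->
  (forall k x, Rabs (Derive_n phi k x) <= C * INR (fact k) / rho ^ k) ->
  (forall k x, is_derive (Sk b g phi j k) x (Sk b g phi j (S k) x)) /\
  (forall k x, Rabs (Sk b g phi j k x) <= C / (1 - g) * INR (fact k) / rho ^ k).
Proof.
  intros Hb Hg HC Hr Hd Hbd.
  pose proof (INRb_pos b Hb) as HB.
  set (be := fun m : nat => / INR b ^ S m).
  assert (Hbe : forall m, 0 < be m <= 1).
  { intros m. unfold be. assert (1 <= INR b ^ S m) by (apply pow_R1_Rle; lra).
    split. apply Rinv_0_lt_compat; lra. rewrite <- Rinv_1. apply Rinv_le_contravar; lra. }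
  set (c := fun m : nat => digit_partial b j (S m)).
  assert (Hform : forall k m y, g ^ m * (/ INR b ^ S m) ^ k *
     Derive_n phi k ((y + digit_partial b j (S m)) / INR b ^ S m)
     = g ^ m * be m ^ k * Derive_n phi k (be m * y + be m * c m)).
  { intros. unfold be, c. f_equal. f_equal. unfold Rdiv. ring. }
  set (F := fun k m y => g ^ m * be m ^ k * Derive_n phi k (be m * y + be m * c m)).
  assert (HF : forall k y, Sk b g phi j k y = Series (fun m => F k m y)).
  { intros. unfold Sk. apply Series_ext. intros. apply Hform. }
  assert (HdF : forall k m y, is_derive (F k m) y (F (S k) m y)).
  { intros k m y. unfold F.
    replace (g ^ m * be m ^ S k * Derive_n phi (S k) (be m * y + be m * c m))
      with (g ^ m * be m ^ k * (be m * Derive_n phi (S k) (be m * y + be m * c m))) by (simpl; ring).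
    apply isd_scal. apply isd_comp_lin. apply Hd. }
  assert (HbF : forall k m y, Rabs (F k m y) <= g ^ m * (C * INR (fact k) / rho ^ k)).
  { intros k m y. unfold F. rewrite !Rabs_mult.
    rewrite (Rabs_pos_eq (g ^ m)) by (apply pow_le; lra).
    rewrite (Rabs_pos_eq (be m ^ k)) by (apply pow_le; pose proof (Hbe m); lra).
    rewrite Rmult_assoc. apply Rmult_le_compat_l. apply pow_le; lra.
    rewrite <- (Rmult_1_l (C * INR (fact k) / rho ^ k)).
    apply Rmult_le_compat. apply pow_le; pose proof (Hbe m); lra. apply Rabs_pos.
    apply pow_le_one. pose proof (Hbe m); lra. auto. }
  set (K := fun k => C * INR (fact k) / rho ^ k).
  assert (HK : forall k, 0 <= K k).
  { intros k. unfold K. apply Rmult_le_pos. apply Rmult_le_pos. lra. apply pos_INR.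
    apply Rlt_le, Rinv_0_lt_compat, pow_lt; lra. }
  assert (Hgeo : forall A, ex_series (fun m => g ^ m * A)).
  { intros A. apply exs_scal_r. apply ex_series_geom. rewrite Rabs_pos_eq; lra. }
  split.
  - intros k x. rewrite (HF (S k)).
    apply (is_derive_ext (fun y => Series (fun m => F k m y))). { intros; rewrite HF; auto. }
    apply (series_derive (F k) (F (S k)) (F (S (S k))) (fun m => g ^ m * (K k + K (S k) + K (S (S k))))).
    + intros; apply HdF.
    + intros; apply HdF.
    + intros m y. eapply Rle_trans. apply HbF. apply Rmult_le_compat_l. apply pow_le; lra.
      fold (K k). pose proof (HK (S k)). pose proof (HK (S (S k))). lra.
    + intros m y. eapply Rle_trans. apply HbF. apply Rmult_le_compat_l. apply pow_le; lra.
      fold (K (S k)). pose proof (HK k). pose proof (HK (S (S k))). lra.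
    + intros m y. eapply Rle_trans. apply HbF. apply Rmult_le_compat_l. apply pow_le; lra.
      fold (K (S (S k))). pose proof (HK (S k)). pose proof (HK k). lra.
    + apply Hgeo.
  - intros k x. rewrite HF.
    eapply Rle_trans. apply (Series_bound _ (fun m => g ^ m * K k)). intros; apply HbF.
    apply Hgeo. rewrite Series_scal_r.
    change (Series (pow g)) with (Series (fun n => g ^ n)). rewrite (is_series_unique _ _ (is_series_geom g ltac:(rewrite Rabs_pos_eq; lra))).
    unfold K. right. field. repeat split; try lra; apply pow_nonzero; lra.
Qed.

Lemma S_ident (b : nat) (g : R) (phi : R -> R) C rho (i j : nat -> nat) :
  (2 <= b)%nat -> 0 < g < 1 -> 0 < C -> 0 < rho ->
  (forall k x, is_derive (Derive_n phi k) x (Derive_n phi (S k) x)) ->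
  (forall k x, Rabs (Derive_n phi k x) <= C * INR (fact k) / rho ^ k) ->
  (forall x, 0 <= x <= 1 -> S_fun b g phi x j - S_fun b g phi x i = 0) ->
  forall x, S_fun b g phi x j = S_fun b g phi x i.
Proof.
  intros Hb Hg HC Hr Hd Hbd H x.
  destruct (Sk_chain b g phi C rho j Hb Hg HC Hr Hd Hbd) as [Dj Bj].
  destruct (Sk_chain b g phi C rho i Hb Hg HC Hr Hd Hbd) as [Di Bi].
  set (f := fun k x => Sk b g phi j k x - Sk b g phi i k x).
  assert (Z : f 0%nat x = 0).
  { apply (chain_zero f (2 * (C / (1 - g))) rho 0 1); auto. lra.
    - intros k y. unfold f. apply isd_minus; auto.
    - intros k y. unfold f. replace (Sk b g phi j k y - Sk b g phi i k y) with (Sk b g phi j k y + - Sk b g phi i k y) by ring.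
      eapply Rle_trans. apply Rabs_triang.
      rewrite Rabs_Ropp. specialize (Bj k y). specialize (Bi k y).
      replace (2 * (C / (1 - g)) * INR (fact k) / rho ^ k) with
        (C / (1 - g) * INR (fact k) / rho ^ k + C / (1 - g) * INR (fact k) / rho ^ k) by (field; repeat split; try lra; apply pow_nonzero; lra).
      lra.
    - intros y Hy. unfold f. rewrite !Sk0. auto. }
  unfold f in Z. rewrite !Sk0 in Z. lra.
Qed.

Open Scope R_scope.

Fixpoint fsum (n : nat) (f : nat -> R) : R :=
  match n with O => 0 | S n => fsum n f + f n end.

Lemma fsum_ext n f h : (forall r, (r < n)%nat -> f r = h r) -> fsum n f = fsum n h.
Proof. induction n; intros H; simpl; auto. rewrite IHn, H; auto. Qed.

Lemma fsum_plus n f h : fsum n (fun r => f r + h r) = fsum n f + fsum n h.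
Proof. induction n; simpl. ring. rewrite IHn. ring. Qed.

Lemma fsum_minus n f h : fsum n (fun r => f r - h r) = fsum n f - fsum n h.
Proof. induction n; simpl. ring. rewrite IHn. ring. Qed.

Lemma fsum_scal n c f : fsum n (fun r => c * f r) = c * fsum n f.
Proof. induction n; simpl. ring. rewrite IHn. ring. Qed.

Lemma fsum_const n c : fsum n (fun _ => c) = INR n * c.
Proof. induction n. simpl; ring. cbn [fsum]. rewrite IHn, S_INR. ring. Qed.

Lemma fsum_zero n f : (forall r, (r < n)%nat -> f r = 0) -> fsum n f = 0.
Proof. intros H. rewrite (fsum_ext n f (fun _ => 0)) by auto. rewrite fsum_const. ring. Qed.

Lemma fsum_abs n f : Rabs (fsum n f) <= fsum n (fun r => Rabs (f r)).
Proof. induction n; simpl. rewrite Rabs_R0; lra.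
  eapply Rle_trans. apply Rabs_triang. lra. Qed.

Lemma fsum_le n f h : (forall r, (r < n)%nat -> f r <= h r) -> fsum n f <= fsum n h.
Proof. induction n; intros H; simpl. lra. apply Rplus_le_compat; auto. Qed.

Lemma fsum_shift1 n f : fsum n (fun r => f (S r)) = fsum n f - f 0%nat + f n.
Proof. induction n; simpl. ring. rewrite IHn. ring. Qed.

Lemma fsum_add n m f : fsum (n + m) f = fsum n f + fsum m (fun r => f (n + r)%nat).
Proof. induction m; simpl. rewrite Nat.add_0_r. ring. rewrite Nat.add_succ_r. simpl. rewrite IHm. ring. Qed.

Lemma fsum_split a c f : fsum (c * a) f = fsum c (fun s => fsum a (fun q => f (a * s + q)%nat)).
Proof.
  induction c; simpl. auto.
  rewrite Nat.add_comm, fsum_add, IHc. f_equal.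
  apply fsum_ext. intros. f_equal. lia.
Qed.

Lemma fsum_swap n m (F : nat -> nat -> R) :
  fsum n (fun r => fsum m (fun q => F r q)) = fsum m (fun q => fsum n (fun r => F r q)).
Proof.
  induction n; simpl. rewrite fsum_zero; auto.
  rewrite IHn. rewrite <- fsum_plus. auto.
Qed.

Lemma exs_zero : ex_series (fun _ : nat => 0).
Proof.
  apply (exs_ext (fun n => 0 * (1/2) ^ n)). intros; ring.
  apply exs_scal. apply ex_series_geom. rewrite Rabs_pos_eq; lra.
Qed.

Lemma fsum_exs n (F : nat -> nat -> R) : (forall r, ex_series (F r)) ->
  ex_series (fun m => fsum n (fun r => F r m)).
Proof.
  intros H. induction n; simpl.
  - apply exs_zero.
  - apply exs_plus; auto.
Qed.

Lemma fsum_Series n (F : nat -> nat -> R) : (forall r, ex_series (F r)) ->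
  Series (fun m => fsum n (fun r => F r m)) = fsum n (fun r => Series (F r)).
Proof.
  intros H. induction n; simpl.
  - rewrite (Series_ext _ (fun n => 0 * (1/2) ^ n)) by (intros; ring).
    rewrite Series_scal_l. ring.
  - rewrite Series_plus; auto. rewrite IHn. auto. apply fsum_exs; auto.
Qed.

Open Scope R_scope.

Fixpoint Lf (b : nat) (phi : R -> R) (j : nat) (y : R) : R :=
  match j with
  | O => phi y
  | S j => / INR b * fsum b (fun r => Lf b phi j ((y + INR r) / INR b))
  end.

Definition Gf b g phi y := Series (fun j => g ^ j * Lf b phi (S j) y).
Definition Psi b g phi y := phi y - Gf b g phi (INR b * y) + g * Gf b g phi y.


Lemma Lf_bound b phi M : (2 <= b)%nat -> (forall x, Rabs (phi x) <= M) ->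
  forall j y, Rabs (Lf b phi j y) <= M.
Proof.
  intros Hb HM j. pose proof (INRb_pos b Hb).
  induction j; intros y; simpl; auto.
  rewrite Rabs_mult, Rabs_Rinv, Rabs_pos_eq by lra.
  eapply Rle_trans. apply Rmult_le_compat_l. apply Rlt_le, Rinv_0_lt_compat; lra.
  eapply Rle_trans. apply fsum_abs. apply (fsum_le _ _ (fun _ => M)). intros; apply IHj.
  rewrite fsum_const. right. field. lra.
Qed.

Lemma Lf_lip b phi L : (2 <= b)%nat -> 0 <= L -> (forall x y, Rabs (phi x - phi y) <= L * Rabs (x - y)) ->
  forall j x y, Rabs (Lf b phi j x - Lf b phi j y) <= L * Rabs (x - y).
Proof.
  intros Hb HL0 HL j. pose proof (INRb_pos b Hb).
  induction j; intros x y; simpl; auto.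
  rewrite <- Rmult_minus_distr_l.
  replace (fsum b (fun r => Lf b phi j ((x + INR r) / INR b)) - fsum b (fun r => Lf b phi j ((y + INR r) / INR b)))
    with (fsum b (fun r => Lf b phi j ((x + INR r) / INR b) - Lf b phi j ((y + INR r) / INR b))).
  2: { apply fsum_minus. }
  rewrite Rabs_mult, Rabs_Rinv, Rabs_pos_eq by lra.
  eapply Rle_trans. apply Rmult_le_compat_l. apply Rlt_le, Rinv_0_lt_compat; lra.
  eapply Rle_trans. apply fsum_abs. apply (fsum_le _ _ (fun _ => L * (Rabs (x - y) / INR b))).
  intros r _. eapply Rle_trans. apply IHj. right. f_equal.
  replace ((x + INR r) / INR b - (y + INR r) / INR b) with ((x - y) / INR b) by (field; lra).
  unfold Rdiv. rewrite Rabs_mult, Rabs_Rinv, (Rabs_pos_eq (INR b)) by lra. auto.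
  rewrite fsum_const.
  replace (/ INR b * (INR b * (L * (Rabs (x - y) / INR b)))) with (L * Rabs (x - y) / INR b) by (field; lra).
  pose proof (Rabs_pos (x - y)).
  unfold Rdiv. rewrite <- (Rmult_1_r (L * Rabs (x - y))) at 2. apply Rmult_le_compat_l. nra.
  rewrite <- Rinv_1. apply Rinv_le_contravar; lra.
Qed.

Lemma Lf_per b phi : (2 <= b)%nat -> Z_periodic phi -> forall j y, Lf b phi j (y + 1) = Lf b phi j y.
Proof.
  intros Hb Hper j. pose proof (INRb_pos b Hb).
  induction j; intros y; simpl. apply Hper.
  f_equal.
  set (h := fun r => Lf b phi j ((y + INR r) / INR b)).
  rewrite (fsum_ext b _ (fun r => h (S r))).
  2: { intros r _. unfold h. f_equal. rewrite S_INR. f_equal. ring. }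
  rewrite fsum_shift1. unfold h at 3.
  replace ((y + INR b) / INR b) with (y / INR b + 1) by (field; lra).
  rewrite IHj. unfold h. simpl. replace (y + 0) with y by ring. ring.
Qed.

Open Scope R_scope.

Lemma geo_exs (g A : R) : 0 < g < 1 -> ex_series (fun m => g ^ m * A).
Proof. intros Hg. apply exs_scal_r. apply ex_series_geom. rewrite Rabs_pos_eq; lra. Qed.

Lemma geo_Series (g A : R) : 0 < g < 1 -> Series (fun m => g ^ m * A) = A / (1 - g).
Proof.
  intros Hg. rewrite Series_scal_r. change (Series (fun m => g ^ m)) with (Series (pow g)).
  change (Series (pow g)) with (Series (fun n => g ^ n)).
  rewrite (is_series_unique _ _ (is_series_geom g ltac:(rewrite Rabs_pos_eq; lra))).
  field. lra.
Qed.

Lemma G_exs b g phi M y : (2 <= b)%nat -> 0 < g < 1 -> (forall x, Rabs (phi x) <= M) ->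
  ex_series (fun j => g ^ j * Lf b phi (S j) y).
Proof.
  intros Hb Hg HM. apply (exs_bound _ (fun j => g ^ j * M)). 2: apply geo_exs; auto.
  intros j. rewrite Rabs_mult, Rabs_pos_eq by (apply pow_le; lra).
  apply Rmult_le_compat_l. apply pow_le; lra. apply Lf_bound; auto.
Qed.

Lemma G_bound b g phi M y : (2 <= b)%nat -> 0 < g < 1 -> (forall x, Rabs (phi x) <= M) ->
  Rabs (Gf b g phi y) <= M / (1 - g).
Proof.
  intros Hb Hg HM. unfold Gf. rewrite <- geo_Series by auto.
  apply Series_bound. 2: apply geo_exs; auto.
  intros j. rewrite Rabs_mult, Rabs_pos_eq by (apply pow_le; lra).
  apply Rmult_le_compat_l. apply pow_le; lra. apply Lf_bound; auto.
Qed.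

Lemma G_per b g phi y : (2 <= b)%nat -> Z_periodic phi -> Gf b g phi (y + 1) = Gf b g phi y.
Proof. intros Hb Hper. unfold Gf. apply Series_ext. intros j. rewrite Lf_per; auto. Qed.

Lemma G_lip b g phi M L x y : (2 <= b)%nat -> 0 < g < 1 -> (forall x, Rabs (phi x) <= M) ->
  0 <= L -> (forall x y, Rabs (phi x - phi y) <= L * Rabs (x - y)) ->
  Rabs (Gf b g phi x - Gf b g phi y) <= L / (1 - g) * Rabs (x - y).
Proof.
  intros Hb Hg HM HL0 HL. unfold Gf. rewrite <- Series_minus by (eapply G_exs; eauto).
  replace (L / (1 - g) * Rabs (x - y)) with ((L * Rabs (x - y)) / (1 - g)) by (field; lra).
  rewrite <- geo_Series by auto.
  apply Series_bound. 2: apply geo_exs; auto.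
  intros j. rewrite <- Rmult_minus_distr_l. rewrite Rabs_mult, Rabs_pos_eq by (apply pow_le; lra).
  apply Rmult_le_compat_l. apply pow_le; lra. apply Lf_lip; auto.
Qed.

Lemma G_eq b g phi M y : (2 <= b)%nat -> 0 < g < 1 -> (forall x, Rabs (phi x) <= M) ->
  Gf b g phi y = Lf b phi 1 y + g * (/ INR b * fsum b (fun r => Gf b g phi ((y + INR r) / INR b))).
Proof.
  intros Hb Hg HM. unfold Gf.
  rewrite <- fsum_Series by (intros; eapply G_exs; eauto).
  rewrite <- Series_scal_l.
  rewrite Series_incr_1 by (eapply G_exs; eauto).
  f_equal. simpl pow. rewrite Rmult_1_l. auto.
  rewrite <- Series_scal_l. apply Series_ext. intros j.
  change (Lf b phi (S (S j)) y) with (/ INR b * fsum b (fun r => Lf b phi (S j) ((y + INR r) / INR b))).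
  rewrite (fsum_scal b (g ^ j)).
  change (g ^ S j) with (g * g ^ j). ring.
Qed.

Open Scope R_scope.

Lemma G_perZ b g phi : (2 <= b)%nat -> Z_periodic phi ->
  forall (n : nat) y, Gf b g phi (y + INR n) = Gf b g phi y.
Proof. intros Hb Hper n y. apply (per_nat (Gf b g phi)); auto. intros; apply G_per; auto. Qed.

Lemma Psi_avg b g phi M y : (2 <= b)%nat -> 0 < g < 1 -> Z_periodic phi -> (forall x, Rabs (phi x) <= M) ->
  fsum b (fun r => Psi b g phi (y + INR r / INR b)) = 0.
Proof.
  intros Hb Hg Hper HM. pose proof (INRb_pos b Hb) as HB.
  unfold Psi.
  rewrite (fsum_ext b _ (fun r => (phi (y + INR r / INR b) - Gf b g phi (INR b * y)) +
                                 g * Gf b g phi ((INR b * y + INR r) / INR b))).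
  2: { intros r _. replace (INR b * (y + INR r / INR b)) with (INR b * y + INR r) by (field; lra).
       rewrite G_perZ by auto. f_equal. f_equal. f_equal. field. lra. }
  rewrite fsum_plus, fsum_minus, fsum_scal, fsum_const.
  pose proof (G_eq b g phi M (INR b * y) Hb Hg HM) as E.
  assert (E2 : fsum b (fun r => Gf b g phi ((INR b * y + INR r) / INR b)) =
               INR b / g * (Gf b g phi (INR b * y) - Lf b phi 1 (INR b * y))).
  { rewrite E. field. split; lra. }
  rewrite E2.
  assert (E3 : fsum b (fun r => phi (y + INR r / INR b)) = INR b * Lf b phi 1 (INR b * y)).
  { simpl Lf. rewrite <- Rmult_assoc, Rinv_r, Rmult_1_l by lra.
    apply fsum_ext. intros r _. f_equal. field. lra. }
  rewrite E3. field. lra.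
Qed.

Lemma Psi_per b g phi y : (2 <= b)%nat -> Z_periodic phi -> Psi b g phi (y + 1) = Psi b g phi y.
Proof.
  intros Hb Hper. unfold Psi. rewrite Hper, G_per by auto.
  replace (INR b * (y + 1)) with (INR b * y + INR b) by ring. rewrite G_perZ; auto.
Qed.

Lemma Psi_bound b g phi M y : (2 <= b)%nat -> 0 < g < 1 -> (forall x, Rabs (phi x) <= M) ->
  Rabs (Psi b g phi y) <= M + 2 * (M / (1 - g)).
Proof.
  intros Hb Hg HM. unfold Psi.
  pose proof (G_bound b g phi M (INR b * y) Hb Hg HM).
  pose proof (G_bound b g phi M y Hb Hg HM).
  pose proof (HM y).
  assert (Rabs (g * Gf b g phi y) <= M / (1 - g)).
  { rewrite Rabs_mult, Rabs_pos_eq by lra. pose proof (Rabs_pos (Gf b g phi y)). nra. }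
  eapply Rle_trans. apply Rabs_triang. eapply Rle_trans. apply Rplus_le_compat_r.
  unfold Rminus. apply Rabs_triang. rewrite Rabs_Ropp. lra.
Qed.

Lemma Psi_lip b g phi M L x y : (2 <= b)%nat -> 0 < g < 1 -> (forall x, Rabs (phi x) <= M) ->
  0 <= L -> (forall x y, Rabs (phi x - phi y) <= L * Rabs (x - y)) ->
  Rabs (Psi b g phi x - Psi b g phi y) <= (L + INR b * (L / (1 - g)) + L / (1 - g)) * Rabs (x - y).
Proof.
  intros Hb Hg HM HL0 HL. pose proof (INRb_pos b Hb) as HB. unfold Psi.
  pose proof (HL x y) as H1.
  pose proof (G_lip b g phi M L (INR b * x) (INR b * y) Hb Hg HM HL0 HL) as H2.
  pose proof (G_lip b g phi M L x y Hb Hg HM HL0 HL) as H3.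
  replace (INR b * x - INR b * y) with (INR b * (x - y)) in H2 by ring.
  rewrite Rabs_mult, (Rabs_pos_eq (INR b)) in H2 by lra.
  replace (phi x - Gf b g phi (INR b * x) + g * Gf b g phi x - (phi y - Gf b g phi (INR b * y) + g * Gf b g phi y))
    with ((phi x - phi y) + - (Gf b g phi (INR b * x) - Gf b g phi (INR b * y)) + g * (Gf b g phi x - Gf b g phi y)) by ring.
  eapply Rle_trans. apply Rabs_triang. eapply Rle_trans. apply Rplus_le_compat_r. apply Rabs_triang.
  rewrite Rabs_Ropp, Rabs_mult, (Rabs_pos_eq g) by lra.
  assert (g * Rabs (Gf b g phi x - Gf b g phi y) <= L / (1 - g) * Rabs (x - y)).
  { pose proof (Rabs_pos (Gf b g phi x - Gf b g phi y)). nra. }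
  lra.
Qed.

Lemma telescope (v : nat -> R) K q : 0 <= q < 1 -> (forall n, Rabs (v n) <= K * q ^ n) ->
  is_series (fun n => v n - v (S n)) (v 0%nat).
Proof.
  intros Hq Hv. apply is_series_Reals. intros eps Heps.
  assert (HK : 0 <= K). { specialize (Hv 0%nat). simpl in Hv. pose proof (Rabs_pos (v 0%nat)). lra. }
  pose proof (is_lim_seq_geom q ltac:(rewrite Rabs_pos_eq; lra)) as L.
  apply is_lim_seq_spec in L.
  destruct (L (mkposreal (eps / (K + 1)) ltac:(apply Rdiv_lt_0_compat; lra))) as [N HN].
  exists N. intros n Hn.
  assert (Hs : forall n, sum_f_R0 (fun n => v n - v (S n)) n = v 0%nat - v (S n)).
  { induction n0; simpl. ring. rewrite IHn0. ring. }
  unfold R_dist. rewrite Hs. replace (v 0%nat - v (S n) - v 0%nat) with (- v (S n)) by ring.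
  rewrite Rabs_Ropp. eapply Rle_lt_trans. apply Hv.
  specialize (HN (S n) ltac:(lia)). simpl in HN. rewrite Rminus_0_r in HN. change (q * q ^ n) with (q ^ S n) in HN.
  rewrite Rabs_pos_eq in HN by (apply pow_le; lra).
  apply Rle_lt_trans with ((K + 1) * q ^ S n).
  apply Rmult_le_compat_r. apply pow_le; lra. lra.
  apply (Rmult_lt_compat_l (K + 1)) in HN. 2: lra.
  replace ((K + 1) * (eps / (K + 1))) with eps in HN by (field; lra). lra.
Qed.

Definition Tf b g phi x (w : nat -> nat) :=
  Series (fun m => g ^ m * Psi b g phi ((x + digit_partial b w (S m)) / INR b ^ S m)).

Lemma T_exs b g phi M x w : (2 <= b)%nat -> 0 < g < 1 -> (forall x, Rabs (phi x) <= M) ->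
  ex_series (fun m => g ^ m * Psi b g phi ((x + digit_partial b w (S m)) / INR b ^ S m)).
Proof.
  intros Hb Hg HM. apply (exs_bound _ (fun m => g ^ m * (M + 2 * (M / (1 - g))))).
  2: apply geo_exs; auto.
  intros m. rewrite Rabs_mult, Rabs_pos_eq by (apply pow_le; lra).
  apply Rmult_le_compat_l. apply pow_le; lra. apply Psi_bound; auto.
Qed.

Lemma S_decomp b g phi M x w : (2 <= b)%nat -> 0 < g < 1 -> Z_periodic phi ->
  (forall x, Rabs (phi x) <= M) ->
  S_fun b g phi x w = Gf b g phi x + Tf b g phi x w.
Proof.
  intros Hb Hg Hper HM. pose proof (INRb_pos b Hb) as HB.
  set (y := fun m => (x + digit_partial b w m) / INR b ^ m).
  set (v := fun m => g ^ m * Gf b g phi (y m)).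
  assert (Ht : is_series (fun n => v n - v (S n)) (v 0%nat)).
  { apply (telescope v (M / (1 - g)) g). lra.
    intros n. unfold v. rewrite Rabs_mult, Rabs_pos_eq by (apply pow_le; lra).
    rewrite Rmult_comm. apply Rmult_le_compat_r. apply pow_le; lra. apply G_bound; auto. }
  assert (Hv0 : v 0%nat = Gf b g phi x).
  { unfold v, y. simpl. rewrite Rmult_1_l. f_equal. unfold Rdiv. rewrite Rinv_1. ring. }
  unfold S_fun, Tf.
  rewrite (Series_ext _ (fun m => g ^ m * Psi b g phi ((x + digit_partial b w (S m)) / INR b ^ S m) + (v m - v (S m)))).
  2: { intros m. unfold v. 
       assert (Ey : INR b * y (S m) = y m + INR (w m)).
       { unfold y. simpl digit_partial. simpl pow. field. split. apply pow_nonzero. lra. lra. }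
       unfold Psi. fold (y (S m)). rewrite Ey, G_perZ by auto. simpl pow. ring. }
  rewrite Series_plus. 2: eapply T_exs; eauto. 2: eexists; exact Ht.
  rewrite (is_series_unique _ _ Ht), Hv0. ring.
Qed.

Open Scope R_scope.

Lemma Psi_perN b g phi : (2 <= b)%nat -> Z_periodic phi ->
  forall (n : nat) y, Psi b g phi (y + INR n) = Psi b g phi y.
Proof. intros Hb Hper n y. apply (per_nat (Psi b g phi)); auto. intros; apply Psi_per; auto. Qed.

Lemma zero_block1 b g phi M w k : (2 <= b)%nat -> 0 < g < 1 -> Z_periodic phi ->
  (forall x, Rabs (phi x) <= M) -> (1 <= k)%nat ->
  fsum (b ^ k) (fun q => Psi b g phi (w + INR q / INR b ^ k)) = 0.
Proof.
  intros Hb Hg Hper HM Hk. pose proof (INRb_pos b Hb) as HB.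
  destruct k as [|k]. lia.
  replace (b ^ S k)%nat with (b * b ^ k)%nat by (simpl; lia).
  rewrite fsum_split, fsum_swap. apply fsum_zero. intros q _.
  rewrite <- (Psi_avg b g phi M (w + INR q / INR b ^ S k)) by auto.
  apply fsum_ext. intros s _. f_equal.
  rewrite plus_INR, mult_INR, pow_INR. simpl pow. field.
  repeat split; try lra; apply pow_nonzero; lra.
Qed.

Lemma zero_block b g phi M w k Mx : (2 <= b)%nat -> 0 < g < 1 -> Z_periodic phi ->
  (forall x, Rabs (phi x) <= M) -> (1 <= k)%nat -> (k <= Mx)%nat ->
  fsum (b ^ Mx) (fun q => Psi b g phi (w + INR q / INR b ^ k)) = 0.
Proof.
  intros Hb Hg Hper HM Hk HkM. pose proof (INRb_pos b Hb) as HB.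
  replace (b ^ Mx)%nat with (b ^ (Mx - k) * b ^ k)%nat by (rewrite <- Nat.pow_add_r; f_equal; lia).
  rewrite fsum_split. apply fsum_zero. intros s _.
  rewrite <- (zero_block1 b g phi M w k) by auto.
  apply fsum_ext. intros q _.
  rewrite plus_INR, mult_INR, pow_INR.
  replace (w + (INR b ^ k * INR s + INR q) / INR b ^ k) with ((w + INR q / INR b ^ k) + INR s).
  apply Psi_perN; auto. field. apply pow_nonzero. lra.
Qed.

Lemma sum_fsum (a : nat -> R) N : sum_f_R0 a N = fsum (S N) a.
Proof. induction N; simpl. ring. rewrite IHN. simpl. ring. Qed.

Definition Tn b g phi n z (w : nat -> nat) :=
  fsum n (fun m => g ^ m * Psi b g phi ((z + digit_partial b w (S m)) / INR b ^ S m)).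

Lemma avg_T b g phi M z w n Mx : (2 <= b)%nat -> 0 < g < 1 -> Z_periodic phi ->
  (forall x, Rabs (phi x) <= M) -> (1 <= Mx)%nat ->
  Rabs (/ INR b ^ Mx * fsum (b ^ Mx) (fun q => Tf b g phi (z + INR b ^ n * INR q) w) - Tn b g phi n z w)
    <= (M + 2 * (M / (1 - g))) * g ^ Mx / (1 - g).
Proof.
  intros Hb Hg Hper HM HMx. pose proof (INRb_pos b Hb) as HB.
  set (MP := M + 2 * (M / (1 - g))).
  assert (HMP : forall y, Rabs (Psi b g phi y) <= MP) by (intros; apply Psi_bound; auto).
  assert (HBM : 0 < INR b ^ Mx) by (apply pow_lt; lra).
  set (a := fun m => / INR b ^ Mx * fsum (b ^ Mx) (fun q =>
         g ^ m * Psi b g phi ((z + INR b ^ n * INR q + digit_partial b w (S m)) / INR b ^ S m))).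
  assert (HA : / INR b ^ Mx * fsum (b ^ Mx) (fun q => Tf b g phi (z + INR b ^ n * INR q) w) = Series a).
  { unfold Tf. rewrite <- fsum_Series by (intros; eapply T_exs; eauto).
    rewrite <- Series_scal_l. auto. }
  assert (Ha : forall m, Rabs (a m) <= g ^ m * MP).
  { intros m. unfold a. rewrite Rabs_mult, Rabs_Rinv, Rabs_pos_eq by lra.
    eapply Rle_trans. apply Rmult_le_compat_l. apply Rlt_le, Rinv_0_lt_compat; lra.
    eapply Rle_trans. apply fsum_abs. apply (fsum_le _ _ (fun _ => g ^ m * MP)).
    intros q _. rewrite Rabs_mult, (Rabs_pos_eq (g ^ m)) by (apply pow_le; lra).
    apply Rmult_le_compat_l. apply pow_le; lra. apply HMP.
    rewrite fsum_const, pow_INR. right. field. lra. }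
  assert (Hexa : ex_series a).
  { apply (exs_bound _ (fun m => g ^ m * MP)); auto. apply geo_exs; auto. }
  rewrite HA. rewrite (Series_incr_n a (n + Mx)) by (auto; lia).
  rewrite sum_fsum. replace (S (Init.Nat.pred (n + Mx))) with (n + Mx)%nat by lia.
  rewrite fsum_add.
  assert (E1 : fsum n a = Tn b g phi n z w).
  { unfold Tn. apply fsum_ext. intros m Hm. unfold a.
    rewrite (fsum_ext _ _ (fun _ => g ^ m * Psi b g phi ((z + digit_partial b w (S m)) / INR b ^ S m))).
    rewrite fsum_const, pow_INR. field. lra.
    intros q _. f_equal.
    replace ((z + INR b ^ n * INR q + digit_partial b w (S m)) / INR b ^ S m) with
      ((z + digit_partial b w (S m)) / INR b ^ S m + INR (b ^ (n - S m) * q)).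
    apply Psi_perN; auto.
    rewrite mult_INR, pow_INR.
    replace n with ((n - S m) + S m)%nat at 2 by lia. rewrite pow_add. field.
    repeat split; try lra; apply pow_nonzero; lra. }
  assert (E2 : fsum Mx (fun r => a (n + r)%nat) = 0).
  { apply fsum_zero. intros r Hr. unfold a.
    rewrite (fsum_ext _ _ (fun q => g ^ (n + r) * Psi b g phi
        ((z + digit_partial b w (S (n + r))) / INR b ^ S (n + r) + INR q / INR b ^ (S r)))).
    rewrite fsum_scal. rewrite (zero_block b g phi M _ (S r) Mx) by (auto; lia). ring.
    intros q _. f_equal. f_equal.
    replace (S (n + r)) with (n + S r)%nat by lia. rewrite pow_add. field.
    repeat split; try lra; apply pow_nonzero; lra. }
  rewrite E1, E2.
  replace (Tn b g phi n z w + 0 + Series (fun k => a (n + Mx + k)%nat) - Tn b g phi n z w)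
    with (Series (fun k => a (n + Mx + k)%nat)) by ring.
  eapply Rle_trans. apply (Series_bound _ (fun k => g ^ k * (g ^ Mx * MP))).
  - intros k. eapply Rle_trans. apply Ha. rewrite !pow_add.
    assert (0 <= g ^ n <= 1) by (split; [apply pow_le; lra| apply pow_le_one; lra]).
    assert (0 <= g ^ k) by (apply pow_le; lra).
    assert (0 <= g ^ Mx) by (apply pow_le; lra).
    assert (0 <= MP) by (pose proof (HMP 0); pose proof (Rabs_pos (Psi b g phi 0)); lra).
    assert (0 <= g ^ Mx * g ^ k * MP) by (repeat apply Rmult_le_pos; auto).
    nra.
  - apply geo_exs; auto.
  - rewrite geo_Series by auto. right. fold MP. field. lra.
Qed.

Open Scope R_scope.

Lemma T_level b g phi M i j : (2 <= b)%nat -> 0 < g < 1 -> Z_periodic phi ->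
  (forall x, Rabs (phi x) <= M) -> (forall z, Tf b g phi z i = Tf b g phi z j) ->
  forall n z, Tn b g phi n z i = Tn b g phi n z j.
Proof.
  intros Hb Hg Hper HM HT n z.
  set (MP := M + 2 * (M / (1 - g))).
  cut (Tn b g phi n z i - Tn b g phi n z j = 0). lra.
  apply (geom_zero _ (2 * (MP / (1 - g))) g). lra.
  intros k.
  pose proof (avg_T b g phi M z i n (S k) Hb Hg Hper HM ltac:(lia)) as Ai.
  pose proof (avg_T b g phi M z j n (S k) Hb Hg Hper HM ltac:(lia)) as Aj.
  rewrite (fsum_ext _ (fun q => Tf b g phi (z + INR b ^ n * INR q) i) (fun q => Tf b g phi (z + INR b ^ n * INR q) j)) in Ai by auto.
  fold MP in Ai, Aj.
  set (A := / INR b ^ S k * fsum (b ^ S k) (fun q => Tf b g phi (z + INR b ^ n * INR q) j)) in *.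
  replace (Tn b g phi n z i - Tn b g phi n z j) with (- (A - Tn b g phi n z i) + (A - Tn b g phi n z j)) by ring.
  eapply Rle_trans. apply Rabs_triang. rewrite Rabs_Ropp.
  assert (MP * g ^ S k / (1 - g) <= MP / (1 - g) * g ^ k).
  { assert (0 <= MP) by (unfold MP; pose proof (HM 0); pose proof (Rabs_pos (phi 0)); 
      assert (0 <= M / (1 - g)) by (apply Rdiv_le_0_compat; lra); lra).
    simpl pow. assert (0 <= g ^ k) by (apply pow_le; lra).
    assert (0 <= MP / (1 - g)) by (apply Rdiv_le_0_compat; lra).
    replace (MP * (g * g ^ k) / (1 - g)) with (g * (MP / (1 - g) * g ^ k)) by (field; lra).
    rewrite <- (Rmult_1_l (MP / (1 - g) * g ^ k)) at 2.
    apply Rmult_le_compat_r. apply Rmult_le_pos; auto. lra. }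
  lra.
Qed.

Lemma Psi_shift b g phi M i j : (2 <= b)%nat -> 0 < g < 1 -> Z_periodic phi ->
  (forall x, Rabs (phi x) <= M) -> (forall z, Tf b g phi z i = Tf b g phi z j) ->
  forall N y, Psi b g phi (y + (digit_partial b j N - digit_partial b i N) / INR b ^ N) = Psi b g phi y.
Proof.
  intros Hb Hg Hper HM HT N y. pose proof (INRb_pos b Hb) as HB.
  destruct N as [|N].
  - simpl. f_equal. field.
  - pose proof (T_level b g phi M i j Hb Hg Hper HM HT) as L.
    set (z := INR b ^ S N * y - digit_partial b i (S N)).
    pose proof (L (S N) z) as L1. pose proof (L N z) as L0.
    unfold Tn in L1. cbn [fsum] in L1. unfold Tn in L0. rewrite L0 in L1.
    apply Rplus_eq_reg_l in L1.
    apply Rmult_eq_reg_l in L1. 2: apply pow_nonzero; lra.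
    assert (Hp : INR b ^ S N <> 0) by (apply pow_nonzero; lra).
    replace ((z + digit_partial b i (S N)) / INR b ^ S N) with y in L1 by (unfold z; field; auto).
    rewrite L1. f_equal. unfold z. field. auto.
Qed.

Open Scope Z_scope.

Lemma nat_div_fact (n h : nat) : (1 <= h <= n)%nat -> Nat.divide h (fact n).
Proof.
  induction n; intros H. lia.
  simpl fact. destruct (Nat.eq_dec h (S n)) as [E|E].
  - subst. exists (fact n). lia.
  - destruct (IHn ltac:(lia)) as [k Hk]. exists (k + n * k)%nat. rewrite Hk. lia.
Qed.

Lemma Z_div_fact (K h : Z) : 1 <= h <= K -> (h | Z.of_nat (fact (Z.to_nat K))).
Proof.
  intros H. destruct (nat_div_fact (Z.to_nat K) (Z.to_nat h) ltac:(lia)) as [k Hk].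
  exists (Z.of_nat k). rewrite Hk, Nat2Z.inj_mul. f_equal. lia.
Qed.

Lemma exists_min (Q : nat -> Prop) : (exists k, Q k) -> exists k, Q k /\ forall k', (k' < k)%nat -> ~ Q k'.
Proof.
  intros [k Hk]. revert Hk. induction k as [k IH] using (well_founded_induction Wf_nat.lt_wf).
  intros Hk. destruct (classic (exists k', (k' < k)%nat /\ Q k')) as [[k' [H1 H2]]|N].
  - apply (IH k' H1 H2).
  - exists k. split; auto. intros k' Hk' Hq. apply N. eauto.
Qed.

Lemma stabilize (c : nat -> Z) (q : Z) :
  (forall N, 0 < c N <= q) -> (forall N N', (N <= N')%nat -> c N <= c N') ->
  exists N1, forall N, (N1 <= N)%nat -> c N = c N1.
Proof.
  intros Hb Hm.
  assert (H : forall m : nat, forall N0, (Z.to_nat (q - c N0) <= m)%nat ->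
             exists N1, forall N, (N1 <= N)%nat -> c N = c N1).
  { induction m as [|m IH]; intros N0 HN0.
    - exists N0. intros N HN. pose proof (Hm N0 N HN). pose proof (Hb N). lia.
    - destruct (classic (exists N, (N0 <= N)%nat /\ c N <> c N0)) as [[N [H1 H2]]|Nn].
      + apply (IH N). pose proof (Hm N0 N H1). pose proof (Hb N). pose proof (Hb N0). lia.
      + exists N0. intros N HN. destruct (Z.eq_dec (c N) (c N0)); auto. exfalso. apply Nn; eauto. }
  apply (H _ 0%nat (le_n _)).
Qed.


Lemma contra_lemma (b q : Z) (D : nat -> Z) (L : nat) :
  2 <= b -> 1 <= q ->
  (forall N, (b ^ Z.of_nat N | q * D N)) ->
  (forall N, (L <= N)%nat -> ~ (b ^ Z.of_nat L | D N)) -> False.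
Proof.
  intros Hb Hq HD HL.
  set (P := fun N : nat => b ^ Z.of_nat N).
  assert (HP : forall N, 0 < P N) by (intros; unfold P; apply Z.pow_pos_nonneg; lia).
  set (c := fun N => Z.gcd (P N) q).
  assert (Hc : forall N, 0 < c N <= q).
  { intros N. unfold c. split.
    - pose proof (Z.gcd_nonneg (P N) q). destruct (Z.eq_dec (Z.gcd (P N) q) 0) as [E|E].
      apply Z.gcd_eq_0 in E. lia. lia.
    - apply Z.divide_pos_le. lia. apply Z.gcd_divide_r. }
  assert (HPS : forall N, P (S N) = P N * b).
  { intros N. unfold P. rewrite Nat2Z.inj_succ, Z.pow_succ_r by lia. ring. }
  assert (Hcd : forall N, (c N | c (S N))).
  { intros N. unfold c. apply Z.gcd_greatest. rewrite HPS.
    apply Z.divide_mul_l. apply Z.gcd_divide_l. apply Z.gcd_divide_r. }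
  assert (Hm : forall N N', (N <= N')%nat -> c N <= c N').
  { intros N N' H. induction H. lia. eapply Z.le_trans. apply IHle.
    apply Z.divide_pos_le. apply Hc. apply Hcd. }
  destruct (stabilize c q Hc Hm) as [N1 HN1].
  set (N := (N1 + L)%nat).
  assert (HcN : c N = c N1) by (apply HN1; unfold N; lia).
  set (cc := c N).
  assert (Hcc : 0 < cc) by apply Hc.
  destruct (Z.gcd_divide_l (P N) q) as [beta Hbeta]. fold (c N) cc in Hbeta.
  destruct (Z.gcd_divide_r (P N) q) as [kappa Hkappa]. fold (c N) cc in Hkappa.
  assert (Hg1 : Z.gcd beta kappa = 1).
  { assert (E1 : beta = P N / cc) by (rewrite Hbeta, Z.div_mul; lia).
    assert (E2 : kappa = q / cc) by (rewrite Hkappa at 1; rewrite Z.div_mul; lia).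
    rewrite E1, E2. apply Z.gcd_div_gcd. lia. auto. }
  assert (Hd1 : (beta | kappa * D N)).
  { apply (Z.mul_divide_cancel_l _ _ cc). lia.
    replace (cc * beta) with (P N) by lia. replace (cc * (kappa * D N)) with (q * D N) by lia.
    apply HD. }
  assert (Hd2 : (beta | D N)) by (apply (Z.gauss _ kappa); auto).
  destruct (Z.gcd_divide_l (P N1) q) as [s Hs]. fold (c N1) in Hs. rewrite <- HcN in Hs. fold cc in Hs.
  assert (EPN : P N = P N1 * P L).
  { unfold P, N. rewrite Nat2Z.inj_add, Z.pow_add_r by lia. auto. }
  assert (Hbeta2 : beta = s * P L).
  { apply (Z.mul_cancel_l _ _ cc). lia. rewrite Z.mul_comm, <- Hbeta, EPN, Hs. ring. }
  apply (HL N). unfold N; lia.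
  apply (Z.divide_trans _ beta). rewrite Hbeta2. apply Z.divide_factor_r. auto.
Qed.

Close Scope Z_scope.
Open Scope R_scope.
Open Scope R_scope.

Fixpoint dpZ (b : nat) (w : nat -> nat) (n : nat) : Z :=
  match n with
  | O => 0%Z
  | S m => (dpZ b w m + Z.of_nat (w m) * Z.of_nat b ^ Z.of_nat m)%Z
  end.

Lemma dpZ_R b w n : IZR (dpZ b w n) = digit_partial b w n.
Proof.
  induction n; simpl; auto.
  rewrite plus_IZR, mult_IZR, IHn, <- pow_IZR, <- !INR_IZR_INZ. auto.
Qed.

Lemma dpZ_same b (i j : nat -> nat) n : (forall k, (k < n)%nat -> i k = j k) -> dpZ b i n = dpZ b j n.
Proof. induction n; intros H; simpl; auto. rewrite IHn, H; auto. Qed.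

Lemma dpZ_tail b w L t : exists Y, dpZ b w (L + t) = (dpZ b w L + Z.of_nat b ^ Z.of_nat L * Y)%Z.
Proof.
  induction t.
  - exists 0%Z. rewrite Nat.add_0_r. ring.
  - destruct IHt as [Y HY]. exists (Y + Z.of_nat (w (L + t)%nat) * Z.of_nat b ^ Z.of_nat t)%Z.
    rewrite Nat.add_succ_r. simpl. rewrite HY. rewrite Nat2Z.inj_add, Z.pow_add_r by lia. ring.
Qed.

Lemma nondiv b (i j : nat -> nat) : (2 <= b)%nat -> is_digit_seq b i -> is_digit_seq b j ->
  (exists k, i k <> j k) ->
  exists L, forall N, (L <= N)%nat ->
    ~ (Z.of_nat b ^ Z.of_nat L | dpZ b j N - dpZ b i N)%Z.
Proof.
  intros Hb Hi Hj Hk.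
  destruct (exists_min (fun k => i k <> j k) Hk) as [n0 [Hn0 Hmin]].
  assert (Heq : dpZ b i n0 = dpZ b j n0).
  { apply dpZ_same. intros k Hk'. apply NNPP. apply Hmin. auto. }
  exists (S n0). intros N HN Hdiv.
  destruct (dpZ_tail b i (S n0) (N - S n0)) as [Yi HYi].
  destruct (dpZ_tail b j (S n0) (N - S n0)) as [Yj HYj].
  replace (S n0 + (N - S n0))%nat with N in HYi, HYj by lia.
  rewrite HYi, HYj in Hdiv.
  assert (Hd2 : (Z.of_nat b ^ Z.of_nat (S n0) | dpZ b j (S n0) - dpZ b i (S n0))%Z).
  { replace (dpZ b j (S n0) - dpZ b i (S n0))%Z with
      ((dpZ b j (S n0) + Z.of_nat b ^ Z.of_nat (S n0) * Yj - (dpZ b i (S n0) + Z.of_nat b ^ Z.of_nat (S n0) * Yi))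
        - Z.of_nat b ^ Z.of_nat (S n0) * (Yj - Yi))%Z by ring.
    apply Z.divide_sub_r; auto. apply Z.divide_factor_l. }
  simpl dpZ in Hd2. rewrite Heq in Hd2.
  replace (dpZ b j n0 + Z.of_nat (j n0) * Z.of_nat b ^ Z.of_nat n0 -
      (dpZ b j n0 + Z.of_nat (i n0) * Z.of_nat b ^ Z.of_nat n0))%Z
    with (Z.of_nat b ^ Z.of_nat n0 * (Z.of_nat (j n0) - Z.of_nat (i n0)))%Z in Hd2 by ring.
  rewrite Nat2Z.inj_succ, Z.pow_succ_r in Hd2 by lia. rewrite (Z.mul_comm (Z.of_nat b)) in Hd2.
  apply Z.mul_divide_cancel_l in Hd2.
  2: { apply Z.pow_nonzero; lia. }
  destruct Hd2 as [t Ht].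
  pose proof (Hi n0). pose proof (Hj n0).
  destruct (Z.eq_dec t 0) as [E|E].
  - subst. apply Hn0. lia.
  - nia.
Qed.

Lemma small_period b (i j : nat -> nat) : (2 <= b)%nat -> is_digit_seq b i -> is_digit_seq b j ->
  (exists k, i k <> j k) ->
  forall eps, 0 < eps -> exists N (u v : Z),
    0 < IZR u * ((digit_partial b j N - digit_partial b i N) / INR b ^ N) + IZR v < eps.
Proof.
  intros Hb Hi Hj Hk eps Heps.
  destruct (nondiv b i j Hb Hi Hj Hk) as [L HL].
  set (bZ := Z.of_nat b).
  set (D := fun N => (dpZ b j N - dpZ b i N)%Z).
  set (P := fun N : nat => (bZ ^ Z.of_nat N)%Z).
  assert (HP : forall N, (0 < P N)%Z) by (intros; unfold P, bZ; apply Z.pow_pos_nonneg; lia).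
  set (gN := fun N => Z.gcd (D N) (P N)).
  assert (Hg : forall N, (0 < gN N)%Z).
  { intros N. unfold gN. pose proof (Z.gcd_nonneg (D N) (P N)).
    destruct (Z.eq_dec (Z.gcd (D N) (P N)) 0) as [E|E].
    apply Z.gcd_eq_0 in E. specialize (HP N). lia. lia. }
  destruct (archimed (/ eps)) as [Hup _].
  set (K := up (/ eps)).
  assert (Hup' : IZR K > / eps) by exact Hup. clear Hup. rename Hup' into Hup.
  assert (HK : (1 <= K)%Z).
  { assert (0 < / eps) by (apply Rinv_0_lt_compat; auto).
    assert (H0 : 0 < IZR K) by lra. apply lt_IZR in H0. lia. }
  assert (HN : exists N, (K * gN N < P N)%Z).
  { apply NNPP. intros Hn.
    assert (Hall : forall N, (P N <= K * gN N)%Z).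
    { intros N. apply Z.nlt_ge. intros C. apply Hn. eauto. }
    set (q := Z.of_nat (fact (Z.to_nat K))).
    assert (Hq : (1 <= q)%Z).
    { unfold q. pose proof (lt_O_fact (Z.to_nat K)). lia. }
    apply (contra_lemma bZ q D L). unfold bZ; lia. auto.
    2: { intros N HNL. apply HL. auto. }
    intros N.
    destruct (Z.gcd_divide_r (D N) (P N)) as [h Hh]. fold (gN N) in Hh.
    destruct (Z.gcd_divide_l (D N) (P N)) as [d' Hd']. fold (gN N) in Hd'.
    assert (Hh1 : (1 <= h <= K)%Z).
    { specialize (Hall N). specialize (Hg N). specialize (HP N). split; nia. }
    destruct (Z_div_fact K h Hh1) as [q' Hq']. fold q in Hq'.
    exists (q' * d')%Z. change (bZ ^ Z.of_nat N)%Z with (P N). rewrite Hq', Hd', Hh. ring. }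
  destruct HN as [N HN].
  destruct (Z.gcd_bezout (D N) (P N) (gN N) eq_refl) as [u [v Huv]].
  exists N, u, v.
  assert (HPR : INR b ^ N = IZR (P N)).
  { unfold P, bZ. rewrite <- pow_IZR, <- INR_IZR_INZ. auto. }
  assert (E : IZR u * ((digit_partial b j N - digit_partial b i N) / INR b ^ N) + IZR v
              = IZR (gN N) / IZR (P N)).
  { rewrite HPR, <- !dpZ_R, <- Huv. rewrite plus_IZR, !mult_IZR. unfold D.
    rewrite minus_IZR. field. apply not_0_IZR. specialize (HP N). lia. }
  rewrite E.
  assert (HPp : 0 < IZR (P N)) by (apply IZR_lt; auto).
  assert (HgN : 0 < IZR (gN N)) by (apply IZR_lt; auto).
  split. apply Rdiv_lt_0_compat; auto.
  apply IZR_lt in HN. rewrite mult_IZR in HN.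
  apply (Rmult_lt_reg_r (IZR (P N))); auto. unfold Rdiv. rewrite Rmult_assoc, Rinv_l by lra.
  assert (eps * IZR K > 1).
  { apply (Rmult_lt_compat_l eps) in Hup; auto. rewrite Rinv_r in Hup by lra. lra. }
  apply Rlt_le_trans with (eps * IZR K * IZR (gN N)). nra.
  rewrite Rmult_assoc. apply Rmult_le_compat_l. lra. lra.
Qed.

Open Scope R_scope.

Lemma per_gen (f : R -> R) p : (forall x, f (x + p) = f x) -> forall (z : Z) x, f (x + IZR z * p) = f x.
Proof.
  intros H z x.
  pose proof (per_Z (fun t => f (x + t * p))) as P.
  simpl in P. specialize (P ltac:(intros t; replace (x + (t + 1) * p) with ((x + t * p) + p) by ring; apply H) z 0).
  rewrite Rplus_0_l, Rmult_0_l, Rplus_0_r in P. auto.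
Qed.

Lemma const_small (f : R -> R) K : 0 <= K -> (forall x y, Rabs (f x - f y) <= K * Rabs (x - y)) ->
  (forall eps, 0 < eps -> exists th, 0 < th < eps /\ forall y, f (y + th) = f y) ->
  forall y, f y = f 0.
Proof.
  intros HK HL HP y.
  cut (f y - f 0 = 0). lra.
  apply (small_zero _ K 1). lra. auto.
  intros s Hs. destruct (HP s ltac:(lra)) as [th [Hth Hper]].
  set (k := Int_part (y / th)).
  destruct (base_Int_part (y / th)) as [B1 B2]. fold k in B1, B2.
  assert (E : f y = f (y + IZR (- k) * th)) by (symmetry; apply per_gen; auto).
  rewrite E, opp_IZR.
  assert (Hk1 : IZR k * th <= y).
  { apply (Rmult_le_compat_r th) in B1. 2: lra. unfold Rdiv in B1.
    rewrite Rmult_assoc, Rinv_l, Rmult_1_r in B1 by lra. auto. }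
  assert (Hk2 : y - IZR k * th < th).
  { assert (y / th < IZR k + 1) by lra.
    apply (Rmult_lt_compat_r th) in H. 2: lra. unfold Rdiv in H.
    rewrite Rmult_assoc, Rinv_l, Rmult_1_r in H by lra. lra. }
  eapply Rle_trans. apply HL. rewrite Rminus_0_r.
  rewrite Rabs_pos_eq by lra. apply Rmult_le_compat_l; auto. lra.
Qed.

Lemma key b g phi C rho (i j : nat -> nat) :
  (2 <= b)%nat -> 0 < g < 1 -> Z_periodic phi -> 0 < C -> 0 < rho ->
  (forall k x, is_derive (Derive_n phi k) x (Derive_n phi (S k) x)) ->
  (forall k x, Rabs (Derive_n phi k x) <= C * INR (fact k) / rho ^ k) ->
  is_digit_seq b i -> is_digit_seq b j -> (exists k, i k <> j k) ->
  (forall x, 0 <= x <= 1 -> S_fun b g phi x j - S_fun b g phi x i = 0) ->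
  cond_Hstar b g phi.
Proof.
  intros Hb Hg Hper HC Hr Hd Hbd Hi Hj Hk H01.
  pose proof (INRb_pos b Hb) as HB.
  assert (HM : forall x, Rabs (phi x) <= C).
  { intros x. specialize (Hbd 0%nat x). simpl in Hbd. lra. }
  set (L := C / rho).
  assert (HL0 : 0 <= L) by (unfold L; apply Rdiv_le_0_compat; lra).
  assert (HL : forall x y, Rabs (phi x - phi y) <= L * Rabs (x - y)).
  { intros x y. apply (mvt_bound phi (Derive_n phi 1) y x L (Hd 0%nat)).
    intros t _. eapply Rle_trans. apply Hbd. unfold L. simpl. right. field. lra. }
  pose proof (S_ident b g phi C rho i j Hb Hg HC Hr Hd Hbd H01) as HS.
  assert (HT : forall z, Tf b g phi z i = Tf b g phi z j).
  { intros z. pose proof (HS z) as E.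
    rewrite !(S_decomp b g phi C) in E by auto. lra. }
  pose proof (Psi_shift b g phi C i j Hb Hg Hper HM HT) as Hsh.
  set (f := Psi b g phi).
  assert (Hc : forall y, f y = f 0).
  { apply (const_small f (L + INR b * (L / (1 - g)) + L / (1 - g))).
    - assert (0 <= L / (1 - g)) by (apply Rdiv_le_0_compat; lra). nra.
    - intros x y. apply (Psi_lip b g phi C); auto.
    - intros eps Heps. destruct (small_period b i j Hb Hi Hj Hk eps Heps) as [N [u [v Huv]]].
      eexists. split. exact Huv. intros y.
      rewrite <- Rplus_assoc. unfold f.
      rewrite (per_Z (Psi b g phi)) by (intros; apply Psi_per; auto).
      apply (per_gen (Psi b g phi)). intros x. apply Hsh. }
  assert (H0 : f 0 = 0).
  { pose proof (Psi_avg b g phi C 0 Hb Hg Hper HM) as A.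
    rewrite (fsum_ext _ _ (fun _ => f 0)) in A. rewrite fsum_const in A.
    apply Rmult_integral in A. destruct A; auto. lra.
    intros r _. apply Hc. }
  assert (HT0 : forall x w, Tf b g phi x w = 0).
  { intros x w. unfold Tf. rewrite (Series_ext _ (fun m => 0 * (1/2) ^ m)).
    rewrite Series_scal_l. ring.
    intros m. fold f. rewrite Hc, H0. ring. }
  intros i' j' _ _ x _.
  rewrite !(S_decomp b g phi C) by auto. rewrite !HT0. ring.
Qed.

Theorem theorem2p2 (b : nat) (gamma : R) (phi : R -> R)
  (hb : (2 <= b)%nat) (hgamma : 0 < gamma < 1)
  (hphi_an : real_analytic phi) (hphi_per : Z_periodic phi) :
  (cond_Hstar b gamma phi /\ ~ cond_H b gamma phi) \/
  (~ cond_Hstar b gamma phi /\ cond_H b gamma phi).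
Proof.
  destruct (classic (cond_Hstar b gamma phi)) as [Hs|Hs].
  - left. split; auto. intros HH.
    destruct (HH (fun _ => 0%nat) (fun _ => 1%nat)) as [x [Hx Hne]].
    + intros k. lia.
    + intros k. lia.
    + exists 0%nat. lia.
    + apply Hne. apply Hs; auto; intros k; lia.
  - right. split; auto.
    destruct (phi_global phi hphi_an hphi_per) as [C [rho [HC [Hr [Hd Hbd]]]]].
    intros i j Hi Hj Hk. apply NNPP. intros Hn. apply Hs.
    apply (key b gamma phi C rho i j); auto.
    intros x Hx. apply NNPP. intros Hne. apply Hn. exists x. auto.
Qed.
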